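(* Assume only the weight regularity condition (so $\mathbb E[W^2]<\infty$). Then \[ \lim_{\beta\nearrow\beta_c}\widetilde\chi(\beta,0^+)(\beta_c-\beta)=\frac{\mathbb E[W]^2}{\mathbb E[W^2]}\tanh(\beta_c), \] so in particular $\boldsymbol\gamma=1$.
   Context: Weights $w_i>0$, $W_N=w_{U_N}$, $U_N$ uniform on $[N]$. Weight regularity: $W_N\to W$ in distribution, $\mathbb E[W_N^2]\to\mathbb E[W^2]<\infty$, $\mathbb E[W]>0$. $\nu=\mathbb E[W^2]/\mathbb E[W]$, $\beta_c={\rm asinh}(1/\nu)$, $\alpha(\beta)=\sqrt{\sinh(\beta)/\mathbb E[W]}$. For $B>0$, $z^*(\beta,B)$ is the unique positive solution of $z=\mathbb E[\tanh(\alpha(\beta)Wz+B)\alpha(\beta)W]$ (for $\beta<\beta_c$, $z^*(\beta,B)\to0$ as $B\searrow0$), $\widetilde M(\beta,B)=\mathbb E[\tanh(\alpha(\beta)Wz^*+B)]$ is the limiting annealed magnetization of the Ising model on the generalized random graph, $\widetilde\chi(\beta,B)=\partial_B\widetilde M(\beta,B)$ the limiting annealed susceptibility, and $\widetilde\chi(\beta,0^+)=\lim_{B\searrow0}\widetilde\chi(\beta,B)$. The critical exponent $\boldsymbol\gamma$ is defined by $\widetilde\chi(\beta,0^+)\asymp(\beta_c-\beta)^{-\boldsymbol\gamma}$ as $\beta\nearrow\beta_c$. *)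

(* Defs.v *)
From Stdlib Require Import Reals Lra ClassicalEpsilon.
Open Scope R_scope.


(* The law of the limiting weight W >= 0 is represented by its quantile
   function Q : (0,1) -> [0,oo), nondecreasing: W has the law of Q(U),
   U uniform on (0,1).  Hence E[g(W)] = \int_0^1 g(Q u) du, an (in general
   improper at 0 and 1) Riemann integral. *)
Definition is_quantile (Q : R -> R) : Prop :=
  (forall u, 0 < u < 1 -> 0 <= Q u) /\
  (forall u v, 0 < u -> u <= v -> v < 1 -> Q u <= Q v).

Definition improper01 (h : R -> R) (l : R) : Prop :=
  (forall a b, 0 < a -> a <= b -> b < 1 -> inhabited (Riemann_integrable h a b)) /\
  (forall eps, 0 < eps -> exists delta, 0 < delta /\
     forall a b, 0 < a < delta -> 1 - delta < b < 1 ->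
       forall pr : Riemann_integrable h a b, Rabs (RiemannInt pr - l) < eps).

Definition Expect (Q : R -> R) (g : R -> R) : R :=
  epsilon (inhabits 0) (fun l => improper01 (fun u => g (Q u)) l).

Definition EW (Q : R -> R) : R := Expect Q (fun w => w).
Definition EW2 (Q : R -> R) : R := Expect Q (fun w => w ^ 2).

Definition nu (Q : R -> R) : R := EW2 Q / EW Q.
Definition beta_c (Q : R -> R) : R := arcsinh (/ nu Q).
Definition alpha (Q : R -> R) (beta : R) : R := sqrt (sinh beta / EW Q).

Definition zstar (Q : R -> R) (beta B : R) : R :=
  epsilon (inhabits 0) (fun z => 0 < z /\
    z = Expect Q (fun w => tanh (alpha Q beta * w * z + B) * (alpha Q beta * w))).

Definition Mtilde (Q : R -> R) (beta B : R) : R :=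
  Expect Q (fun w => tanh (alpha Q beta * w * zstar Q beta B + B)).

(* Main.v *)
Require Import Defs.
From Coquelicot Require Import Coquelicot.
From Stdlib Require Import Reals Lra ClassicalEpsilon.
Open Scope R_scope.

Lemma pos_Rl_map (g : R -> R) (l : list R) (i : nat) :
  (i < length l)%nat -> RList.pos_Rl (List.map g l) i = g (RList.pos_Rl l i).
Proof.
  revert i; induction l as [|x l IH]; intros i Hi; simpl in *.
  - inversion Hi.
  - destruct i; [reflexivity|]. apply IH. simpl in Hi. apply PeanoNat.Nat.succ_lt_mono. exact Hi.
Qed.

Definition comp_IsStepFun (g : R -> R) (a b : R) (phi : StepFun a b) :
  IsStepFun (fun t => g (phi t)) a b.
Proof.
  destruct phi as [f [l [lf H]]]. simpl.
  exists l. exists (List.map g lf).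
  destruct H as [H1 [H2 [H3 [H4 H5]]]].
  split; [exact H1|]. split; [exact H2|]. split; [exact H3|].
  split; [rewrite List.length_map; exact H4|].
  intros i Hi x Hx. rewrite (H5 i Hi x Hx). rewrite pos_Rl_map; [reflexivity|].
  rewrite H4 in Hi. simpl in Hi. exact Hi.
Defined.

Lemma Riemann_integrable_lip (g Q : R -> R) (a b m M L : R) :
  m <= M -> 0 <= L ->
  (forall t, Rmin a b <= t <= Rmax a b -> m <= Q t <= M) ->
  (forall x y, m <= x <= M -> m <= y <= M -> Rabs (g x - g y) <= L * Rabs (x - y)) ->
  Riemann_integrable Q a b -> Riemann_integrable (fun t => g (Q t)) a b.
Proof.
  intros HmM HL HQ Hg HI eps.
  set (cl := fun x => Rmax m (Rmin M x)).
  assert (Hcl : forall x, m <= cl x <= M).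
  { intro x; unfold cl, Rmax, Rmin; repeat destruct Rle_dec; lra. }
  assert (Hcl1 : forall x y, Rabs (cl x - cl y) <= Rabs (x - y)).
  { intros x y; unfold cl, Rmax, Rmin; repeat destruct Rle_dec;
    unfold Rabs; repeat destruct Rcase_abs; lra. }
  assert (Hclid : forall x, m <= x <= M -> cl x = x).
  { intros x Hx; unfold cl, Rmax, Rmin; repeat destruct Rle_dec; lra. }
  assert (He : 0 < eps / (L + 1)).
  { apply Rdiv_lt_0_compat; [apply cond_pos|lra]. }
  destruct (HI (mkposreal _ He)) as [phi [psi [Hp1 Hp2]]].
  exists (mkStepFun (comp_IsStepFun (fun x => g (cl x)) a b phi)).
  exists (mkStepFun (StepFun_P28 (L+1) (mkStepFun (StepFun_P4 a b 0)) psi)).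
  split.
  - intros t Ht. simpl. unfold fct_cte.
    specialize (Hp1 t Ht). specialize (HQ t Ht).
    rewrite <- (Hclid (Q t) HQ) at 1.
    eapply Rle_trans. apply Hg; apply Hcl.
    eapply Rle_trans. apply Rmult_le_compat_l. exact HL. apply Hcl1.
    assert (0 <= Rabs (Q t - phi t)) by apply Rabs_pos.
    assert (L * Rabs (Q t - phi t) <= L * psi t) by (apply Rmult_le_compat_l; lra).
    nra.
  - rewrite StepFun_P30. rewrite StepFun_P18. simpl in Hp2.
    rewrite Rmult_0_l, Rplus_0_l, Rabs_mult, (Rabs_right (L+1)) by lra.
    apply Rmult_lt_reg_r with (/ (L+1)). apply Rinv_0_lt_compat; lra.
    replace ((L + 1) * Rabs (RiemannInt_SF psi) * / (L + 1)) with (Rabs (RiemannInt_SF psi)) by (field; lra).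
    exact Hp2.
Qed.

Lemma tanh_exp x : tanh x = (exp x * exp x - 1) / (exp x * exp x + 1).
Proof.
  unfold tanh, sinh, cosh. rewrite exp_Ropp. assert (H := exp_pos x).
  field. split; nra.
Qed.

Lemma tanh_bound x : -1 < tanh x < 1.
Proof.
  rewrite tanh_exp. assert (H := exp_pos x). set (e := exp x) in *.
  assert (0 < e * e + 1) by nra.
  assert (Hq : (e*e-1)/(e*e+1) * (e*e+1) = e*e-1) by (field; lra).
  set (q := (e*e-1)/(e*e+1)) in *. split; nra.
Qed.

Lemma tanh_0 : tanh 0 = 0.
Proof. rewrite tanh_exp, exp_0. field. Qed.

Lemma tanh_opp x : tanh (- x) = - tanh x.
Proof. unfold tanh, sinh, cosh. rewrite Ropp_involutive. assert (H1 := exp_pos x). assert (H2 := exp_pos (-x)). field. lra. Qed.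

Lemma cosh_pos x : 0 < cosh x.
Proof. unfold cosh. assert (H1 := exp_pos x). assert (H2 := exp_pos (-x)). lra. Qed.

Lemma derivable_pt_lim_tanh x : derivable_pt_lim tanh x (1 - tanh x ^ 2).
Proof.
  assert (H := derivable_pt_lim_div sinh cosh x _ _ (derivable_pt_lim_sinh x) (derivable_pt_lim_cosh x)).
  assert (Hc := cosh_pos x).
  replace (1 - tanh x ^ 2) with ((cosh x * cosh x - sinh x * sinh x) / (cosh x)²).
  - apply H. lra.
  - unfold tanh, Rsqr. field. lra.
Qed.

Lemma tanh_lip x y : Rabs (tanh x - tanh y) <= Rabs (x - y).
Proof.
  destruct (Rtotal_order x y) as [Hxy|[Hxy|Hxy]].
  - destruct (MVT_cor2 tanh (fun t => 1 - tanh t ^ 2) x y Hxy (fun c _ => derivable_pt_lim_tanh c)) as [c [Hc _]].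
    rewrite Rabs_minus_sym, Hc, (Rabs_minus_sym x y), Rabs_mult.
    assert (Ht := tanh_bound c).
    rewrite (Rabs_right (1 - tanh c ^ 2)) by nra.
    assert (0 <= Rabs (y - x)) by apply Rabs_pos. nra.
  - subst. rewrite !Rminus_diag, Rabs_R0. lra.
  - destruct (MVT_cor2 tanh (fun t => 1 - tanh t ^ 2) y x Hxy (fun c _ => derivable_pt_lim_tanh c)) as [c [Hc _]].
    rewrite Hc, Rabs_mult.
    assert (Ht := tanh_bound c).
    rewrite (Rabs_right (1 - tanh c ^ 2)) by nra.
    assert (0 <= Rabs (x - y)) by apply Rabs_pos. nra.
Qed.

Lemma tanh_abs_le x : Rabs (tanh x) <= Rabs x.
Proof. pose proof (tanh_lip x 0). rewrite tanh_0, !Rminus_0_r in H. exact H. Qed.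

Lemma tanh_nonneg x : 0 <= x -> 0 <= tanh x.
Proof.
  intro Hx. rewrite tanh_exp. assert (H := exp_pos x).
  assert (1 <= exp x). { destruct Hx as [Hx|Hx]. left. rewrite <- exp_0. apply exp_increasing; lra. subst; rewrite exp_0; lra. }
  apply Rle_mult_inv_pos; nra.
Qed.

Lemma tanh_lower_pos d : 0 <= d <= 1 -> d - d ^ 2 <= tanh d.
Proof.
  intros [H0 H1]. destruct H0 as [H0|H0]; [|subst; rewrite tanh_0; lra].
  set (h := fun t => tanh t - t + t ^ 2).
  assert (Hd : forall c, 0 <= c <= d -> derivable_pt_lim h c (1 - tanh c ^ 2 - 1 + 2 * c)).
  { intros c _. unfold h.
    apply (derivable_pt_lim_plus (fun t => tanh t - t) (fun t => t ^ 2)).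
    apply (derivable_pt_lim_minus tanh (fun t => t)). apply derivable_pt_lim_tanh. apply derivable_pt_lim_id.
    replace (2 * c) with (INR 2 * c ^ (2 - 1)) by (simpl; ring). apply derivable_pt_lim_pow. }
  destruct (MVT_cor2 h _ 0 d H0 Hd) as [c [Hc [Hc1 Hc2]]].
  unfold h in Hc. rewrite tanh_0 in Hc.
  assert (Hr : 0 <= (1 - tanh c ^ 2 - 1 + 2 * c) * (d - 0)).
  { apply Rmult_le_pos; [|lra].
    pose proof (tanh_abs_le c). pose proof (tanh_nonneg c ltac:(lra)).
    rewrite (Rabs_right (tanh c)) in H by lra. rewrite (Rabs_right c) in H by lra. nra. }
  lra.
Qed.

Lemma tanh_sub_id d : Rabs (tanh d - d) <= d ^ 2.
Proof.
  assert (Hpos : forall d, 0 <= d -> Rabs (tanh d - d) <= d ^ 2).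
  { intros e He. pose proof (tanh_abs_le e). pose proof (tanh_nonneg e He).
    rewrite (Rabs_right e) in H by lra. rewrite (Rabs_right (tanh e)) in H by lra.
    rewrite Rabs_left1 by lra.
    destruct (Rle_dec e 1). pose proof (tanh_lower_pos e ltac:(lra)). lra. nra. }
  destruct (Rle_dec 0 d). auto.
  replace (tanh d - d) with (- (tanh (-d) - (-d))) by (rewrite tanh_opp; ring).
  rewrite Rabs_Ropp. replace (d ^ 2) with ((-d)^2) by ring. apply Hpos. lra.
Qed.

Lemma tanh_sub x y : tanh y - tanh x = tanh (y - x) * (1 - tanh x * tanh y).
Proof.
  rewrite !tanh_exp. replace (exp (y - x)) with (exp y * / exp x) by (unfold Rminus; rewrite exp_plus, exp_Ropp; ring).
  assert (H1 := exp_pos x). assert (H2 := exp_pos y).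
  set (X := exp x) in *. set (Y := exp y) in *. field.
  repeat split; try nra.
Qed.

Lemma tanh_taylor x D :
  Rabs (tanh (x + D) - tanh x - (1 - tanh x ^ 2) * D) <= 2 * D ^ 2.
Proof.
  rewrite tanh_sub. replace (x + D - x) with D by ring.
  set (T := tanh x). set (U := tanh (x + D)). set (t := tanh D).
  replace (t * (1 - T * U) - (1 - T ^ 2) * D) with ((t - D) * (1 - T^2) - T * t * (U - T)) by ring.
  assert (HU : U - T = t * (1 - T * U)) by (unfold U, T, t; rewrite (tanh_sub x (x + D)); replace (x + D - x) with D by ring; reflexivity).
  pose proof (tanh_sub_id D). pose proof (tanh_abs_le D).
  pose proof (tanh_bound x). pose proof (tanh_bound (x + D)).
  pose proof (tanh_lip (x + D) x). replace (x + D - x) with D in H3 by ring. fold U T in H3.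
  fold t in H, H0. fold T in H1. fold U in H2.
  eapply Rle_trans. apply Rabs_triang. rewrite Rabs_Ropp, !Rabs_mult.
  assert (Rabs (1 - T^2) <= 1) by (rewrite Rabs_right; nra).
  assert (Rabs T <= 1) by (unfold Rabs; destruct Rcase_abs; lra).
  assert (Rabs D * Rabs D = D ^ 2) by (rewrite <- Rabs_mult; rewrite Rabs_right; [ring|nra]).
  pose proof (Rabs_pos (t - D)). pose proof (Rabs_pos T). pose proof (Rabs_pos t). pose proof (Rabs_pos (U - T)).
  pose proof (Rabs_pos D). pose proof (Rabs_pos (1 - T^2)).
  assert (Rabs T * Rabs t * Rabs (U - T) <= 1 * Rabs D * Rabs D).
  { apply Rmult_le_compat; try nra; try (apply Rmult_le_compat; nra). }
  nra.
Qed.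

Lemma tanh_taylor1 x D :
  Rabs (tanh (x + D) - tanh x - (1 - tanh x ^ 2) * D) <= 2 * Rabs D.
Proof.
  pose proof (tanh_lip (x + D) x). replace (x + D - x) with D in H by ring.
  pose proof (tanh_bound x).
  assert (Rabs ((1 - tanh x ^ 2) * D) <= Rabs D).
  { rewrite Rabs_mult, Rabs_right by nra. pose proof (Rabs_pos D). nra. }
  replace (tanh (x + D) - tanh x - (1 - tanh x ^ 2) * D) with ((tanh (x + D) - tanh x) + - ((1 - tanh x ^ 2) * D)) by ring.
  eapply Rle_trans. apply Rabs_triang. rewrite Rabs_Ropp. lra.
Qed.

Definition LocLip (g : R -> R) : Prop :=
  forall m M, m <= M -> exists L, 0 <= L /\
    forall x y, m <= x <= M -> m <= y <= M -> Rabs (g x - g y) <= L * Rabs (x - y).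

Lemma LocLip_bound g m M : LocLip g -> m <= M -> exists K, forall x, m <= x <= M -> Rabs (g x) <= K.
Proof.
  intros H HmM. destruct (H m M HmM) as [L [HL HL1]].
  exists (Rabs (g m) + L * (M - m)). intros x Hx.
  specialize (HL1 x m Hx ltac:(lra)). rewrite (Rabs_right (x - m)) in HL1 by lra.
  pose proof (Rabs_triang_inv (g x) (g m)).
  assert (L * (x - m) <= L * (M - m)) by (apply Rmult_le_compat_l; lra). lra.
Qed.

Lemma LocLip_const c : LocLip (fun _ => c).
Proof. intros m M _. exists 0. split; [lra|]. intros. rewrite Rminus_diag, Rabs_R0. lra. Qed.

Lemma LocLip_id : LocLip (fun x => x).
Proof. intros m M _. exists 1. split; [lra|]. intros. lra. Qed.

Lemma LocLip_plus f g : LocLip f -> LocLip g -> LocLip (fun x => f x + g x).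
Proof.
  intros Hf Hg m M H. destruct (Hf m M H) as [L1 [H1 H1']]. destruct (Hg m M H) as [L2 [H2 H2']].
  exists (L1 + L2). split; [lra|]. intros x y Hx Hy.
  replace (f x + g x - (f y + g y)) with ((f x - f y) + (g x - g y)) by ring.
  eapply Rle_trans. apply Rabs_triang. specialize (H1' x y Hx Hy). specialize (H2' x y Hx Hy). lra.
Qed.

Lemma LocLip_mult f g : LocLip f -> LocLip g -> LocLip (fun x => f x * g x).
Proof.
  intros Hf Hg m M H. destruct (Hf m M H) as [L1 [H1 H1']]. destruct (Hg m M H) as [L2 [H2 H2']].
  destruct (LocLip_bound f m M Hf H) as [K1 HK1]. destruct (LocLip_bound g m M Hg H) as [K2 HK2].
  assert (0 <= K1) by (specialize (HK1 m ltac:(lra)); pose proof (Rabs_pos (f m)); lra).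
  assert (0 <= K2) by (specialize (HK2 m ltac:(lra)); pose proof (Rabs_pos (g m)); lra).
  exists (K1 * L2 + K2 * L1). split; [nra|]. intros x y Hx Hy.
  replace (f x * g x - f y * g y) with (f x * (g x - g y) + g y * (f x - f y)) by ring.
  eapply Rle_trans. apply Rabs_triang. rewrite !Rabs_mult.
  specialize (H1' x y Hx Hy). specialize (H2' x y Hx Hy). specialize (HK1 x Hx). specialize (HK2 y Hy).
  pose proof (Rabs_pos (f x)). pose proof (Rabs_pos (g y)). pose proof (Rabs_pos (x - y)).
  pose proof (Rabs_pos (g x - g y)). pose proof (Rabs_pos (f x - f y)).
  assert (Rabs (f x) * Rabs (g x - g y) <= K1 * (L2 * Rabs (x - y))) by (apply Rmult_le_compat; lra).
  assert (Rabs (g y) * Rabs (f x - f y) <= K2 * (L1 * Rabs (x - y))) by (apply Rmult_le_compat; lra).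
  nra.
Qed.

Lemma LocLip_comp h f : LocLip h -> LocLip f -> LocLip (fun x => h (f x)).
Proof.
  intros Hh Hf m M H. destruct (Hf m M H) as [L1 [H1 H1']].
  destruct (LocLip_bound f m M Hf H) as [K HK].
  assert (0 <= K) by (specialize (HK m ltac:(lra)); pose proof (Rabs_pos (f m)); lra).
  destruct (Hh (-K) K ltac:(lra)) as [L2 [H2 H2']].
  exists (L2 * L1). split; [nra|]. intros x y Hx Hy.
  assert (Hfx : -K <= f x <= K) by (specialize (HK x Hx); unfold Rabs in HK; destruct Rcase_abs; lra).
  assert (Hfy : -K <= f y <= K) by (specialize (HK y Hy); unfold Rabs in HK; destruct Rcase_abs; lra).
  eapply Rle_trans. apply (H2' _ _ Hfx Hfy). specialize (H1' x y Hx Hy).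
  rewrite Rmult_assoc. apply Rmult_le_compat_l; lra.
Qed.

Lemma LocLip_glob h L : 0 <= L -> (forall x y, Rabs (h x - h y) <= L * Rabs (x - y)) -> LocLip h.
Proof. intros HL H m M _. exists L. split; auto. Qed.

Lemma RInt_plusR (f g : R -> R) a b : ex_RInt f a b -> ex_RInt g a b ->
  RInt (fun x => f x + g x) a b = RInt f a b + RInt g a b.
Proof. intros. exact (RInt_plus f g a b H H0). Qed.
Lemma ex_RInt_plusR (f g : R -> R) a b : ex_RInt f a b -> ex_RInt g a b ->
  ex_RInt (fun x => f x + g x) a b.
Proof. intros. exact (ex_RInt_plus f g a b H H0). Qed.
Lemma RInt_scalR (f : R -> R) a b c : ex_RInt f a b ->
  RInt (fun x => c * f x) a b = c * RInt f a b.
Proof. intros. exact (RInt_scal f a b c H). Qed.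
Lemma ex_RInt_scalR (f : R -> R) a b c : ex_RInt f a b -> ex_RInt (fun x => c * f x) a b.
Proof. intros. exact (ex_RInt_scal f a b c H). Qed.
Lemma RInt_constR a b c : RInt (fun _ => c) a b = (b - a) * c.
Proof. exact (RInt_const a b c). Qed.
Lemma RInt_ChaslesR (f : R -> R) a b c : ex_RInt f a b -> ex_RInt f b c ->
  RInt f a b + RInt f b c = RInt f a c.
Proof. intros. exact (RInt_Chasles f a b c H H0). Qed.

Definition IMP (h : R -> R) (l : R) : Prop :=
  (forall a b, 0 < a -> a <= b -> b < 1 -> ex_RInt h a b) /\
  (forall eps, 0 < eps -> exists delta, 0 < delta <= 1/2 /\
     forall a b, 0 < a < delta -> 1 - delta < b < 1 -> Rabs (RInt h a b - l) < eps).

Lemma IMP_lim h l eps : IMP h l -> 0 < eps -> exists delta, 0 < delta <= 1/2 /\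
     forall a b, 0 < a < delta -> 1 - delta < b < 1 -> Rabs (RInt h a b - l) < eps.
Proof. intros [_ H] He. exact (H eps He). Qed.

Lemma IMP_unique h l1 l2 : IMP h l1 -> IMP h l2 -> l1 = l2.
Proof.
  intros H1 H2. apply Rminus_diag_uniq. apply Rabs_eq_0.
  destruct (Req_dec (Rabs (l1 - l2)) 0) as [E|NE]; auto. exfalso.
  assert (Hp : 0 < Rabs (l1 - l2) / 2) by (pose proof (Rabs_pos (l1 - l2)); lra).
  destruct (IMP_lim h l1 _ H1 Hp) as [d1 [Hd1 P1]].
  destruct (IMP_lim h l2 _ H2 Hp) as [d2 [Hd2 P2]].
  set (d := Rmin d1 d2).
  assert (0 < d) by (unfold d, Rmin; destruct Rle_dec; lra).
  assert (d <= d1 /\ d <= d2) by (unfold d, Rmin; destruct Rle_dec; lra).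
  specialize (P1 (d/2) (1 - d/2) ltac:(lra) ltac:(lra)).
  specialize (P2 (d/2) (1 - d/2) ltac:(lra) ltac:(lra)).
  pose proof (Rabs_triang (l1 - RInt h (d/2) (1 - d/2)) (RInt h (d/2) (1 - d/2) - l2)).
  replace (l1 - RInt h (d / 2) (1 - d / 2) + (RInt h (d / 2) (1 - d / 2) - l2)) with (l1 - l2) in H3 by ring.
  rewrite Rabs_minus_sym in P1. lra.
Qed.

Lemma IMP_improper h l : IMP h l -> improper01 h l.
Proof.
  intros [H1 H2]. split.
  - intros a b Ha Hab Hb. constructor. apply ex_RInt_Reals_0. apply H1; auto.
  - intros eps He. destruct (H2 eps He) as [d [Hd P]]. exists d. split; [lra|].
    intros a b Ha Hb pr. rewrite <- RInt_Reals. apply P; auto.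
Qed.

Lemma improper_IMP h l : improper01 h l -> IMP h l.
Proof.
  intros [H1 H2]. split.
  - intros a b Ha Hab Hb. destruct (H1 a b Ha Hab Hb) as [pr]. apply ex_RInt_Reals_1. exact pr.
  - intros eps He. destruct (H2 eps He) as [d [Hd P]]. exists (Rmin d (1/2)). split.
    + unfold Rmin; destruct Rle_dec; lra.
    + intros a b Ha Hb.
      assert (Hm : Rmin d (1/2) <= d /\ Rmin d (1/2) <= 1/2) by (unfold Rmin; destruct Rle_dec; lra).
      destruct (H1 a b ltac:(lra) ltac:(lra) ltac:(lra)) as [pr].
      rewrite (RInt_Reals h a b pr). apply P; lra.
Qed.

Lemma Rmin_spec2 x y : Rmin x y <= x /\ Rmin x y <= y /\ (Rmin x y = x \/ Rmin x y = y).
Proof. unfold Rmin; destruct Rle_dec; lra. Qed.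
Lemma Rmax_spec2 x y : x <= Rmax x y /\ y <= Rmax x y /\ (Rmax x y = x \/ Rmax x y = y).
Proof. unfold Rmax; destruct Rle_dec; lra. Qed.

Lemma IMP_const c : IMP (fun _ => c) c.
Proof.
  split.
  - intros. apply ex_RInt_const.
  - intros eps He. exists (Rmin (1/2) (eps / (2 * (Rabs c + 1)))).
    assert (Hc : 0 < Rabs c + 1) by (pose proof (Rabs_pos c); lra).
    assert (Hp : 0 < eps / (2 * (Rabs c + 1))) by (apply Rdiv_lt_0_compat; lra).
    destruct (Rmin_spec2 (1/2) (eps / (2 * (Rabs c + 1)))) as [M1 [M2 M3]].
    split. destruct M3 as [M3|M3]; rewrite M3; lra.
    intros a b Ha Hb. rewrite RInt_constR.
    replace ((b - a) * c - c) with (- ((1 - b + a) * c)) by ring.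
    rewrite Rabs_Ropp, Rabs_mult, Rabs_right by lra.
    set (d := Rmin (1 / 2) (eps / (2 * (Rabs c + 1)))) in *.
    assert (1 - b + a <= 2 * d) by lra.
    assert (2 * d * (Rabs c + 1) <= eps).
    { apply Rle_trans with (2 * (eps / (2 * (Rabs c + 1))) * (Rabs c + 1)).
      apply Rmult_le_compat_r; lra. right. field. lra. }
    pose proof (Rabs_pos c).
    assert ((1 - b + a) * Rabs c <= 2 * d * Rabs c) by (apply Rmult_le_compat_r; lra).
    nra.
Qed.

Lemma IMP_plus h1 h2 l1 l2 c : IMP h1 l1 -> IMP h2 l2 ->
  IMP (fun u => h1 u + c * h2 u) (l1 + c * l2).
Proof.
  intros H1 H2. split.
  - intros a b Ha Hab Hb. apply ex_RInt_plusR. apply H1; auto. apply ex_RInt_scalR. apply H2; auto.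
  - intros eps He.
    assert (Hc : 0 < Rabs c + 1) by (pose proof (Rabs_pos c); lra).
    destruct (IMP_lim h1 l1 (eps/2) H1 ltac:(lra)) as [d1 [Hd1 P1]].
    destruct (IMP_lim h2 l2 (eps/2/(Rabs c + 1)) H2 ltac:(apply Rdiv_lt_0_compat; lra)) as [d2 [Hd2 P2]].
    exists (Rmin d1 d2). destruct (Rmin_spec2 d1 d2) as [M1 [M2 M3]].
    split. destruct M3 as [M3|M3]; rewrite M3; lra.
    intros a b Ha Hb.
    assert (Hab : a <= b) by lra.
    rewrite RInt_plusR, RInt_scalR.
    2: apply H2; lra. 2: apply H1; lra. 2: apply ex_RInt_scalR; apply H2; lra.
    specialize (P1 a b ltac:(lra) ltac:(lra)). specialize (P2 a b ltac:(lra) ltac:(lra)).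
    replace (RInt h1 a b + c * RInt h2 a b - (l1 + c * l2)) with
      ((RInt h1 a b - l1) + c * (RInt h2 a b - l2)) by ring.
    eapply Rle_lt_trans. apply Rabs_triang. rewrite Rabs_mult.
    assert (Rabs c * Rabs (RInt h2 a b - l2) <= (Rabs c + 1) * (eps / 2 / (Rabs c + 1))).
    { apply Rmult_le_compat; try apply Rabs_pos; lra. }
    replace ((Rabs c + 1) * (eps / 2 / (Rabs c + 1))) with (eps/2) in H by (field; lra).
    lra.
Qed.

Lemma IMP_le h1 h2 l1 l2 : IMP h1 l1 -> IMP h2 l2 ->
  (forall u, 0 < u < 1 -> h1 u <= h2 u) -> l1 <= l2.
Proof.
  intros H1 H2 Hle. destruct (Rle_dec l1 l2) as [|N]; auto. exfalso.
  set (e := (l1 - l2) / 3). assert (0 < e) by (unfold e; lra).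
  destruct (IMP_lim h1 l1 e H1 H) as [d1 [Hd1 P1]].
  destruct (IMP_lim h2 l2 e H2 H) as [d2 [Hd2 P2]].
  set (d := Rmin d1 d2). destruct (Rmin_spec2 d1 d2) as [M1 [M2 M3]]. fold d in M1, M2, M3.
  assert (0 < d) by (destruct M3 as [M3|M3]; rewrite M3; lra).
  specialize (P1 (d/2) (1 - d/2) ltac:(lra) ltac:(lra)).
  specialize (P2 (d/2) (1 - d/2) ltac:(lra) ltac:(lra)).
  assert (RInt h1 (d/2) (1 - d/2) <= RInt h2 (d/2) (1 - d/2)).
  { apply RInt_le. lra. apply H1; lra. apply H2; lra. intros x Hx. apply Hle. lra. }
  unfold Rabs in P1, P2; destruct Rcase_abs; destruct Rcase_abs; unfold e in *; lra.
Qed.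

Lemma RInt_dom_abs h k a b : a <= b -> ex_RInt h a b -> ex_RInt k a b ->
  (forall u, a < u < b -> Rabs (h u) <= k u) -> Rabs (RInt h a b) <= RInt k a b.
Proof.
  intros Hab Hh Hk Hd.
  assert (RInt h a b <= RInt k a b).
  { apply RInt_le; auto. intros. specialize (Hd x H). unfold Rabs in Hd; destruct Rcase_abs; lra. }
  assert (RInt (fun x => -1 * k x) a b <= RInt h a b).
  { apply RInt_le; auto. apply ex_RInt_scalR; auto. intros. specialize (Hd x H0). unfold Rabs in Hd; destruct Rcase_abs; lra. }
  rewrite RInt_scalR in H0 by auto.
  unfold Rabs; destruct Rcase_abs; lra.
Qed.

Lemma nest h k lo a b hi :
  (forall a b, 0 < a -> a <= b -> b < 1 -> ex_RInt h a b) ->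
  (forall a b, 0 < a -> a <= b -> b < 1 -> ex_RInt k a b) ->
  (forall u, 0 < u < 1 -> Rabs (h u) <= k u) ->
  0 < lo -> lo <= a -> a <= b -> b <= hi -> hi < 1 ->
  Rabs (RInt h a b - RInt h lo hi) <= RInt k lo hi - RInt k a b.
Proof.
  intros Hh Hk Hd H1 H2 H3 H4 H5.
  rewrite <- (RInt_ChaslesR h lo a hi), <- (RInt_ChaslesR h a b hi) by (apply Hh; lra).
  rewrite <- (RInt_ChaslesR k lo a hi), <- (RInt_ChaslesR k a b hi) by (apply Hk; lra).
  assert (E1 := RInt_dom_abs h k lo a ltac:(lra) ltac:(apply Hh; lra) ltac:(apply Hk; lra) ltac:(intros; apply Hd; lra)).
  assert (E2 := RInt_dom_abs h k b hi ltac:(lra) ltac:(apply Hh; lra) ltac:(apply Hk; lra) ltac:(intros; apply Hd; lra)).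
  replace (RInt h a b - (RInt h lo a + (RInt h a b + RInt h b hi))) with (- (RInt h lo a + RInt h b hi)) by ring.
  rewrite Rabs_Ropp. eapply Rle_trans. apply Rabs_triang. lra.
Qed.

Lemma IMP_cauchy h k K :
  (forall a b, 0 < a -> a <= b -> b < 1 -> ex_RInt h a b) -> IMP k K ->
  (forall u, 0 < u < 1 -> Rabs (h u) <= k u) ->
  forall eps, 0 < eps -> exists delta, 0 < delta <= 1/2 /\
    forall a b a' b', 0 < a < delta -> 1 - delta < b < 1 -> 0 < a' < delta -> 1 - delta < b' < 1 ->
      Rabs (RInt h a b - RInt h a' b') < eps.
Proof.
  intros Hh Hk Hd eps He.
  destruct (IMP_lim k K (eps/4) Hk ltac:(lra)) as [d [Hd0 P]].
  exists d. split; auto. intros a b a' b' Ha Hb Ha' Hb'.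
  set (lo := Rmin a a'). set (hi := Rmax b b').
  destruct (Rmin_spec2 a a') as [m1 [m2 m3]]. destruct (Rmax_spec2 b b') as [n1 [n2 n3]].
  fold lo in m1, m2, m3. fold hi in n1, n2, n3.
  assert (0 < lo < d) by (destruct m3 as [m3|m3]; rewrite m3; lra).
  assert (1 - d < hi < 1) by (destruct n3 as [n3|n3]; rewrite n3; lra).
  assert (N1 := nest h k lo a b hi Hh (proj1 Hk) Hd ltac:(lra) m1 ltac:(lra) n1 ltac:(lra)).
  assert (N2 := nest h k lo a' b' hi Hh (proj1 Hk) Hd ltac:(lra) m2 ltac:(lra) n2 ltac:(lra)).
  pose proof (P lo hi H H0). pose proof (P a b Ha Hb). pose proof (P a' b' Ha' Hb').
  replace (RInt h a b - RInt h a' b') with ((RInt h a b - RInt h lo hi) - (RInt h a' b' - RInt h lo hi)) by ring.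
  unfold Rminus at 1. eapply Rle_lt_trans. apply Rabs_triang. rewrite Rabs_Ropp.
  unfold Rabs in H1, H2, H3. repeat destruct Rcase_abs; lra.
Qed.

Lemma IMP_exists h k K :
  (forall a b, 0 < a -> a <= b -> b < 1 -> ex_RInt h a b) -> IMP k K ->
  (forall u, 0 < u < 1 -> Rabs (h u) <= k u) -> exists l, IMP h l.
Proof.
  intros Hh Hk Hd.
  set (s := fun n : nat => / (INR n + 3)).
  assert (Hs : forall n, 0 < s n <= 1/3).
  { intro n. unfold s. pose proof (pos_INR n). split. apply Rinv_0_lt_compat; lra.
    replace (1/3) with (/3) by field. apply Rinv_le_contravar; lra. }
  assert (Hsmall : forall d, 0 < d -> exists N, forall n, (n >= N)%nat -> s n < d).
  { intros d Hd0. destruct (archimed_cor1 d Hd0) as [N [HN HN0]]. exists N. intros n Hn.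
    unfold s. apply Rle_lt_trans with (/ INR N); auto. apply Rinv_le_contravar.
    apply lt_0_INR; auto. apply le_INR in Hn. lra. }
  set (u := fun n => RInt h (s n) (1 - s n)).
  assert (HC : Cauchy_crit u).
  { intros eps He. destruct (IMP_cauchy h k K Hh Hk Hd eps He) as [d [Hd0 P]].
    destruct (Hsmall d ltac:(lra)) as [N HN]. exists N. intros n m Hn Hm.
    unfold Rdist, u. specialize (HN n Hn) as A. specialize (HN m Hm) as B.
    pose proof (Hs n); pose proof (Hs m). apply P; lra. }
  destruct (R_complete u HC) as [l Hl]. exists l. split; [auto|].
  intros eps He. destruct (IMP_cauchy h k K Hh Hk Hd (eps/2) ltac:(lra)) as [d [Hd0 P]].
  exists d. split; auto. intros a b Ha Hb.
  destruct (Hsmall d ltac:(lra)) as [N1 HN1]. destruct (Hl (eps/2) ltac:(lra)) as [N2 HN2].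
  set (n := max N1 N2). specialize (HN1 n (Nat.le_max_l _ _)). specialize (HN2 n (Nat.le_max_r _ _)).
  unfold Rdist, u in HN2. pose proof (Hs n).
  specialize (P a b (s n) (1 - s n) Ha Hb ltac:(lra) ltac:(lra)).
  replace (RInt h a b - l) with ((RInt h a b - RInt h (s n) (1 - s n)) + (RInt h (s n) (1 - s n) - l)) by ring.
  eapply Rle_lt_trans. apply Rabs_triang. lra.
Qed.

Definition Hyp (Q : R -> R) : Prop :=
  is_quantile Q /\ (exists m2, improper01 (fun u => Q u ^ 2) m2) /\
  (exists m1, 0 < m1 /\ improper01 (fun u => Q u) m1).

Definition Good (g : R -> R) : Prop :=
  LocLip g /\ exists C, 0 <= C /\ forall w, 0 <= w -> Rabs (g w) <= C * (1 + w ^ 2).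

Lemma Hyp_int Q g a b : Hyp Q -> LocLip g -> 0 < a -> a <= b -> b < 1 ->
  ex_RInt (fun u => g (Q u)) a b.
Proof.
  intros [[HQ0 HQm] [_ [m1 [_ [HI _]]]]] Hg Ha Hab Hb.
  destruct (HI a b Ha Hab Hb) as [pr].
  assert (Hmono : Q a <= Q b) by (apply HQm; lra).
  destruct (Hg (Q a) (Q b) Hmono) as [L [HL HL1]]. apply ex_RInt_Reals_1.
  apply (Riemann_integrable_lip g Q a b (Q a) (Q b) L Hmono HL); auto.
  intros t Ht. rewrite Rmin_left, Rmax_right in Ht by lra.
  split; apply HQm; lra.
Qed.

Lemma Q_nonneg Q u : Hyp Q -> 0 < u < 1 -> 0 <= Q u.
Proof. intros [[H _] _] Hu. apply H; auto. Qed.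

Lemma IMP_ext h1 h2 l : (forall u, 0 < u < 1 -> h1 u = h2 u) -> IMP h1 l -> IMP h2 l.
Proof.
  intros He [H1 H2]. split.
  - intros a b Ha Hab Hb. apply (ex_RInt_ext h1). intros x Hx.
    rewrite Rmin_left, Rmax_right in Hx by lra. apply He; lra. apply H1; auto.
  - intros eps Heps. destruct (H2 eps Heps) as [d [Hd P]]. exists d. split; auto.
    intros a b Ha Hb. rewrite <- (RInt_ext h1). apply P; auto.
    intros x Hx. rewrite Rmin_left, Rmax_right in Hx by lra. apply He; lra.
Qed.

Lemma IMP_Q2 Q : Hyp Q -> exists m2, IMP (fun u => 1 + Q u ^ 2) (1 + m2).
Proof.
  intros HQ. destruct HQ as [H1 [[m2 H2] H3]]. exists m2.
  apply improper_IMP in H2.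
  pose proof (IMP_plus (fun _ => 1) (fun u => Q u ^ 2) 1 m2 1 (IMP_const 1) H2).
  rewrite Rmult_1_l in H.
  eapply IMP_ext; [|exact H]. intros; simpl; ring.
Qed.

Lemma LocLip_sq : LocLip (fun w => 1 + w ^ 2).
Proof.
  apply LocLip_plus. apply LocLip_const.
  apply (LocLip_mult (fun w => w) (fun w => w * 1)). apply LocLip_id.
  apply (LocLip_mult (fun w => w) (fun _ => 1)). apply LocLip_id. apply LocLip_const.
Qed.

Lemma Expect_IMP Q g : Hyp Q -> Good g -> IMP (fun u => g (Q u)) (Expect Q g).
Proof.
  intros HQ [Hg [C [HC HgC]]].
  destruct (IMP_Q2 Q HQ) as [m2 Hk].
  assert (Hk' := IMP_plus (fun _ => 0) _ 0 _ C (IMP_const 0) Hk).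
  destruct (IMP_exists (fun u => g (Q u)) _ _ (fun a b Ha Hab Hb => Hyp_int Q g a b HQ Hg Ha Hab Hb) Hk') as [l Hl].
  { intros u Hu. rewrite Rplus_0_l. apply HgC. apply Q_nonneg; auto. }
  unfold Expect. apply improper_IMP.
  apply epsilon_spec. exists l. apply IMP_improper. exact Hl.
Qed.

Lemma Expect_eq Q g l : Hyp Q -> Good g -> IMP (fun u => g (Q u)) l -> Expect Q g = l.
Proof. intros. eapply IMP_unique; [apply Expect_IMP|]; eauto. Qed.

Lemma Good_plus g1 g2 c : Good g1 -> Good g2 -> Good (fun w => g1 w + c * g2 w).
Proof.
  intros [H1 [C1 [HC1 B1]]] [H2 [C2 [HC2 B2]]]. split.
  - apply LocLip_plus; auto. apply LocLip_mult; auto. apply LocLip_const.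
  - exists (C1 + Rabs c * C2). split. pose proof (Rabs_pos c). nra.
    intros w Hw. eapply Rle_trans. apply Rabs_triang. rewrite Rabs_mult.
    specialize (B1 w Hw). specialize (B2 w Hw). pose proof (Rabs_pos c).
    assert (Rabs c * Rabs (g2 w) <= Rabs c * (C2 * (1 + w ^ 2))) by (apply Rmult_le_compat_l; auto). nra.
Qed.

Lemma Good_const c : Good (fun _ => c).
Proof.
  split. apply LocLip_const. exists (Rabs c). split. apply Rabs_pos. intros w Hw.
  pose proof (Rabs_pos c). pose proof (pow2_ge_0 w). nra.
Qed.

Lemma Expect_lin Q g1 g2 c : Hyp Q -> Good g1 -> Good g2 ->
  Expect Q (fun w => g1 w + c * g2 w) = Expect Q g1 + c * Expect Q g2.
Proof.
  intros HQ H1 H2. apply Expect_eq; auto. apply Good_plus; auto.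
  apply (IMP_plus (fun u => g1 (Q u)) (fun u => g2 (Q u))); apply Expect_IMP; auto.
Qed.

Lemma Expect_const Q c : Hyp Q -> Expect Q (fun _ => c) = c.
Proof. intros HQ. apply Expect_eq; auto. apply Good_const. apply IMP_const. Qed.

Lemma Expect_le Q g1 g2 : Hyp Q -> Good g1 -> Good g2 ->
  (forall w, 0 <= w -> g1 w <= g2 w) -> Expect Q g1 <= Expect Q g2.
Proof.
  intros HQ H1 H2 Hle. apply (IMP_le (fun u => g1 (Q u)) (fun u => g2 (Q u))); try apply Expect_IMP; auto.
  intros u Hu. apply Hle. apply Q_nonneg; auto.
Qed.

Lemma Expect_ext Q g1 g2 : Hyp Q -> Good g1 -> Good g2 ->
  (forall w, 0 <= w -> g1 w = g2 w) -> Expect Q g1 = Expect Q g2.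
Proof.
  intros. apply Rle_antisym; apply Expect_le; auto; intros; rewrite H2; auto; lra.
Qed.

Lemma Expect_abs Q g h : Hyp Q -> Good g -> Good h ->
  (forall w, 0 <= w -> Rabs (g w) <= h w) -> Rabs (Expect Q g) <= Expect Q h.
Proof.
  intros HQ Hg Hh Hd.
  assert (Expect Q g <= Expect Q h) by (apply Expect_le; auto; intros w Hw; specialize (Hd w Hw); unfold Rabs in Hd; destruct Rcase_abs; lra).
  assert (Expect Q (fun w => 0 + -1 * h w) <= Expect Q g).
  { apply Expect_le; auto. apply Good_plus; auto. apply Good_const. intros w Hw; specialize (Hd w Hw); unfold Rabs in Hd; destruct Rcase_abs; lra. }
  rewrite Expect_lin, Expect_const in H0; auto. 2: apply Good_const.
  unfold Rabs; destruct Rcase_abs; lra.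
Qed.

Lemma Expect_tail Q C eta : Hyp Q -> 0 <= C -> 0 < eta -> exists K, 0 <= K /\ forall g, LocLip g -> (forall w, 0 <= w -> Rabs (g w) <= C * (1 + w ^ 2)) ->
  (forall w, 0 <= w <= K -> Rabs (g w) <= eta) -> Rabs (Expect Q g) <= 3 * eta.
Proof.
  intros HQ HC Heta. destruct (IMP_Q2 Q HQ) as [m2 Hk].
  set (e := eta / (2 * (C + 1))). assert (He : 0 < e) by (unfold e; apply Rdiv_lt_0_compat; lra).
  destruct (IMP_lim _ _ e Hk He) as [d0 [Hd0 P0]].
  set (c := 1 - d0 / 2). exists (Q c). split. apply Q_nonneg; auto; unfold c; lra.
  intros g Hg Hbd Hsm.
  assert (HG : Good g) by (split; auto; exists C; auto).
  destruct (IMP_lim _ _ eta (Expect_IMP Q g HQ HG) Heta) as [d1 [Hd1 P1]].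
  set (dm := Rmin d0 d1). destruct (Rmin_spec2 d0 d1) as [M1 [M2 M3]]. fold dm in M1, M2, M3.
  assert (0 < dm) by (destruct M3 as [M3|M3]; rewrite M3; lra).
  set (a := dm / 4). set (b := 1 - dm / 4).
  specialize (P1 a b ltac:(unfold a; lra) ltac:(unfold b; lra)).
  assert (Hac : a <= c) by (unfold a, c; lra).
  assert (Hcb : c <= b) by (unfold b, c; lra).
  assert (Hint : forall x y, 0 < x -> x <= y -> y < 1 -> ex_RInt (fun u => g (Q u)) x y)
    by (intros; apply Hyp_int; auto).
  assert (Hintk : forall x y, 0 < x -> x <= y -> y < 1 -> ex_RInt (fun u => 1 + Q u ^ 2) x y)
    by (intros; apply (Hyp_int Q (fun w => 1 + w ^ 2)); auto; apply LocLip_sq).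
  rewrite <- (RInt_ChaslesR _ a c b) in P1 by (apply Hint; unfold a, b, c in *; lra).
  assert (E1 : Rabs (RInt (fun u => g (Q u)) a c) <= RInt (fun _ => eta) a c).
  { apply RInt_dom_abs; auto. apply Hint; unfold a, c in *; lra. apply ex_RInt_const.
    intros u Hu. apply Hsm. split. apply Q_nonneg; auto; unfold a, c in *; lra.
    destruct HQ as [[_ Hm] _]. apply Hm; unfold a, c in *; lra. }
  rewrite RInt_constR in E1.
  assert (E2 : Rabs (RInt (fun u => g (Q u)) c b) <= RInt (fun u => C * (1 + Q u ^ 2)) c b).
  { apply RInt_dom_abs; auto. apply Hint; unfold b, c in *; lra. apply ex_RInt_scalR; apply Hintk; unfold b, c in *; lra.
    intros u Hu. apply Hbd. apply Q_nonneg; auto; unfold a, b, c in *; lra. }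
  rewrite RInt_scalR in E2 by (apply Hintk; unfold b, c in *; lra).
  pose proof (P0 a b ltac:(unfold a; lra) ltac:(unfold b; lra)) as Pab.
  pose proof (P0 a c ltac:(unfold a; lra) ltac:(unfold c; lra)) as Pac.
  rewrite <- (RInt_ChaslesR _ a c b) in Pab by (apply Hintk; unfold a, b, c in *; lra).
  set (kc := RInt (fun u => 1 + Q u ^ 2) c b) in *.
  assert (Hkc : Rabs kc <= 2 * e).
  { unfold Rabs in Pab, Pac |- *. repeat destruct Rcase_abs; lra. }
  assert (C * kc <= eta).
  { apply Rle_trans with ((C + 1) * (2 * e)).
    unfold Rabs in Hkc; destruct Rcase_abs; nra.
    right. unfold e. field. lra. }
  assert ((c - a) * eta <= eta) by (unfold a, c in *; nra).
  replace (Expect Q g) with ((Expect Q g - (RInt (fun u => g (Q u)) a c + RInt (fun u => g (Q u)) c b))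
     + RInt (fun u => g (Q u)) a c + RInt (fun u => g (Q u)) c b) by ring.
  rewrite Rabs_minus_sym in P1.
  eapply Rle_trans. apply Rabs_triang. eapply Rle_trans. apply Rplus_le_compat_r. apply Rabs_triang.
  lra.
Qed.

Lemma LocLip_tanh f : LocLip f -> LocLip (fun x => tanh (f x)).
Proof. intro H. apply (LocLip_comp tanh f); auto. apply (LocLip_glob tanh 1). lra. intros; rewrite Rmult_1_l; apply tanh_lip. Qed.
Lemma LocLip_minus f g : LocLip f -> LocLip g -> LocLip (fun x => f x - g x).
Proof.
  intros. intros m M H1. destruct (LocLip_plus f (fun x => -1 * g x) H (LocLip_mult (fun _ => -1) g (LocLip_const _) H0) m M H1) as [L [HL P]].
  exists L; split; auto; intros x y Hx Hy. specialize (P x y Hx Hy). replace (f x - g x - (f y - g y)) with (f x + -1 * g x - (f y + -1 * g y)) by ring. auto.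
Qed.
Lemma LocLip_pow2 f : LocLip f -> LocLip (fun x => f x ^ 2).
Proof.
  intros. intros m M H1. destruct (LocLip_mult f f H H m M H1) as [L [HL P]].
  exists L; split; auto; intros x y Hx Hy. specialize (P x y Hx Hy). simpl. rewrite !Rmult_1_r. auto.
Qed.

Ltac loclip :=
  lazymatch goal with
  | |- LocLip (fun w => w) => apply LocLip_id
  | |- LocLip (fun w => @?f w + @?g w) => apply (LocLip_plus f g); loclip
  | |- LocLip (fun w => @?f w - @?g w) => apply (LocLip_minus f g); loclip
  | |- LocLip (fun w => @?f w * @?g w) => apply (LocLip_mult f g); loclip
  | |- LocLip (fun w => tanh (@?f w)) => apply (LocLip_tanh f); loclip
  | |- LocLip (fun w => (@?f w) ^ 2) => apply (LocLip_pow2 f); loclip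
  | |- LocLip (fun w => ?c) => apply LocLip_const
  end.

Lemma Good_of g c0 c1 c2 : LocLip g -> 0 <= c0 -> 0 <= c1 -> 0 <= c2 ->
  (forall w, 0 <= w -> Rabs (g w) <= c0 + c1 * w + c2 * w ^ 2) -> Good g.
Proof.
  intros H H0 H1 H2 Hb. split; auto. exists (c0 + c1 + c2). split; [lra|].
  intros w Hw. eapply Rle_trans. apply Hb; auto.
  assert (w <= 1 + w ^ 2) by nra. assert (1 <= 1 + w^2) by nra. nra.
Qed.

Lemma Good_id : Good (fun w => w).
Proof. apply (Good_of _ 0 1 0); try lra. loclip. intros. rewrite Rabs_right; lra. Qed.
Lemma Good_sq : Good (fun w => w ^ 2).
Proof. apply (Good_of _ 0 0 1); try lra. loclip. intros. rewrite Rabs_right; nra. Qed.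

Lemma Good_ext f g : (forall w, f w = g w) -> Good f -> Good g.
Proof.
  intros E [H [C [HC B]]]. split.
  - intros m M H1. destruct (H m M H1) as [L [HL P]]. exists L. split; auto. intros. rewrite <- !E. auto.
  - exists C. split; auto. intros. rewrite <- E. auto.
Qed.


Lemma Expect_scal Q g c : Hyp Q -> Good g -> Expect Q (fun w => c * g w) = c * Expect Q g.
Proof.
  intros HQ Hg. rewrite <- (Rplus_0_l (c * Expect Q g)), <- (Expect_const Q 0 HQ).
  rewrite <- Expect_lin; auto. apply Expect_ext; auto.
  apply (Good_ext (fun w => 0 + c * g w)). intros; ring. apply Good_plus; auto. apply Good_const.
  apply Good_plus; auto. apply Good_const. intros; ring.
  apply Good_const.
Qed.

Lemma Expect_sub Q g1 g2 : Hyp Q -> Good g1 -> Good g2 -> Expect Q (fun w => g1 w - g2 w) = Expect Q g1 - Expect Q g2.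
Proof.
  intros HQ H1 H2. replace (Expect Q g1 - Expect Q g2) with (Expect Q g1 + -1 * Expect Q g2) by ring.
  rewrite <- Expect_lin; auto. apply Expect_ext; auto.
  apply (Good_ext (fun w => g1 w + -1 * g2 w)). intros; ring. apply Good_plus; auto.
  apply Good_plus; auto. intros; ring.
Qed.

Lemma Expect_add Q g1 g2 : Hyp Q -> Good g1 -> Good g2 -> Expect Q (fun w => g1 w + g2 w) = Expect Q g1 + Expect Q g2.
Proof.
  intros HQ H1 H2. replace (Expect Q g1 + Expect Q g2) with (Expect Q g1 + 1 * Expect Q g2) by ring.
  rewrite <- Expect_lin; auto. apply Expect_ext; auto.
  apply (Good_ext (fun w => g1 w + 1 * g2 w)). intros; ring. apply Good_plus; auto.
  apply Good_plus; auto. intros; ring.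
Qed.

Lemma Good_sub g1 g2 : Good g1 -> Good g2 -> Good (fun w => g1 w - g2 w).
Proof. intros. apply (Good_ext (fun w => g1 w + -1 * g2 w)). intros; ring. apply Good_plus; auto. Qed.
Lemma Good_add g1 g2 : Good g1 -> Good g2 -> Good (fun w => g1 w + g2 w).
Proof. intros. apply (Good_ext (fun w => g1 w + 1 * g2 w)). intros; ring. apply Good_plus; auto. Qed.
Lemma Good_scal g c : Good g -> Good (fun w => c * g w).
Proof. intros. apply (Good_ext (fun w => 0 + c * g w)). intros; ring. apply Good_plus; auto. apply Good_const. Qed.

Ltac good :=
  lazymatch goal with
  | |- Good (fun w => w) => apply Good_id
  | |- Good (Rmult ?c) => apply (Good_scal (fun w => w) c); apply Good_id
  | |- Good (fun w => w ^ 2) => apply Good_sq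
  | |- Good (fun w => @?f w + @?g w) => apply (Good_add f g); good
  | |- Good (fun w => @?f w - @?g w) => apply (Good_sub f g); good
  | |- Good (fun w => ?c * @?g w) => apply (Good_scal g c); good
  | |- Good (fun w => ?c) => first [apply Good_const | idtac]
  | _ => idtac
  end.

Lemma EW_eq Q : Hyp Q -> exists m1, 0 < m1 /\ EW Q = m1.
Proof.
  intros HQ. pose proof HQ as [_ [_ [m1 [Hm1 HI]]]]. exists m1. split; auto.
  unfold EW. apply Expect_eq; auto. apply Good_id. apply improper_IMP. exact HI.
Qed.

Lemma EW_pos Q : Hyp Q -> 0 < EW Q.
Proof. intros HQ. destruct (EW_eq Q HQ) as [m [H E]]. lra. Qed.

Lemma EW2_ge Q : Hyp Q -> EW Q ^ 2 <= EW2 Q.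
Proof.
  intros HQ. set (t := EW Q).
  assert (H : 0 <= Expect Q (fun w => (w - t) ^ 2)).
  { rewrite <- (Expect_const Q 0 HQ). apply Expect_le; auto. apply Good_const.
    apply (Good_of _ (t^2) (2 * Rabs t) 1); try lra; [loclip|nra| |].
    pose proof (Rabs_pos t); lra.
    intros w Hw. rewrite Rabs_right by (apply Rle_ge, pow2_ge_0).
    assert (- t * w <= Rabs t * w) by (apply Rmult_le_compat_r; auto; unfold Rabs; destruct Rcase_abs; lra).
    replace ((w - t) ^ 2) with (w^2 - 2*t*w + t^2) by ring. lra.
    intros; apply pow2_ge_0. }
  assert (E : Expect Q (fun w => (w - t) ^ 2) = Expect Q (fun w => w ^ 2) - 2 * t * Expect Q (fun w => w) + t ^ 2).
  { assert (G1 : Good (fun w => (w^2 - 2*t*w) + t^2)) by good.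
    assert (G0 : Good (fun w => (w-t)^2)) by (apply (Good_ext (fun w => (w^2 - 2*t*w) + t^2)); [intros; ring|exact G1]).
    rewrite (Expect_ext Q _ _ HQ G0 G1) by (intros; ring).
    rewrite Expect_add, Expect_sub, Expect_scal, Expect_const; auto; good. }
  unfold EW2. fold t. unfold EW in t. fold t in E. nra.
Qed.

Definition gF (a z B : R) : R -> R := fun w => tanh (a * w * z + B) * (a * w).
Definition FF Q a z B := Expect Q (gF a z B).

Lemma Good_gF a z B : Good (gF a z B).
Proof.
  apply (Good_of _ 0 (Rabs a) 0); try lra. unfold gF; loclip. apply Rabs_pos.
  intros w Hw. unfold gF. rewrite Rabs_mult, Rabs_mult, (Rabs_right w) by lra.
  pose proof (tanh_bound (a * w * z + B)). assert (Rabs (tanh (a * w * z + B)) <= 1) by (unfold Rabs; destruct Rcase_abs; lra).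
  pose proof (Rabs_pos a). pose proof (Rabs_pos (tanh (a * w * z + B))).
  assert (Rabs (tanh (a * w * z + B)) * (Rabs a * w) <= 1 * (Rabs a * w)) by (apply Rmult_le_compat_r; nra).
  lra.
Qed.

Lemma Expect_absc Q g c : Hyp Q -> Good g -> 0 <= c ->
  (forall w, 0 <= w -> Rabs (g w) <= c * w ^ 2) -> Rabs (Expect Q g) <= c * EW2 Q.
Proof.
  intros HQ Hg Hc Hb. unfold EW2. rewrite <- Expect_scal by (auto; apply Good_sq).
  apply Expect_abs; auto. good.
Qed.

Lemma Expect_absc1 Q g c : Hyp Q -> Good g -> 0 <= c ->
  (forall w, 0 <= w -> Rabs (g w) <= c * w) -> Rabs (Expect Q g) <= c * EW Q.
Proof.
  intros HQ Hg Hc Hb. unfold EW. rewrite <- Expect_scal by (auto; apply Good_id).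
  apply Expect_abs; auto. good.
Qed.

Lemma FF_lipz Q a z1 z2 B : Hyp Q -> 0 <= a ->
  Rabs (FF Q a z1 B - FF Q a z2 B) <= a ^ 2 * Rabs (z1 - z2) * EW2 Q.
Proof.
  intros HQ Ha. unfold FF. rewrite <- Expect_sub by (auto; apply Good_gF).
  apply Expect_absc; auto. apply Good_sub; apply Good_gF. pose proof (Rabs_pos (z1 - z2)); nra.
  intros w Hw. unfold gF. rewrite <- Rmult_minus_distr_r, Rabs_mult.
  eapply Rle_trans. apply Rmult_le_compat_r. apply Rabs_pos. apply tanh_lip.
  replace (a * w * z1 + B - (a * w * z2 + B)) with (a * w * (z1 - z2)) by ring.
  rewrite !Rabs_mult, (Rabs_right a), (Rabs_right w) by lra. right; ring.
Qed.

Lemma FF_lipB Q a z B1 B2 : Hyp Q -> 0 <= a ->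
  Rabs (FF Q a z B1 - FF Q a z B2) <= a * Rabs (B1 - B2) * EW Q.
Proof.
  intros HQ Ha. unfold FF. rewrite <- Expect_sub by (auto; apply Good_gF).
  apply Expect_absc1; auto. apply Good_sub; apply Good_gF. pose proof (Rabs_pos (B1 - B2)); nra.
  intros w Hw. unfold gF. rewrite <- Rmult_minus_distr_r, Rabs_mult.
  eapply Rle_trans. apply Rmult_le_compat_r. apply Rabs_pos. apply tanh_lip.
  replace (a * w * z + B1 - (a * w * z + B2)) with (B1 - B2) by ring.
  rewrite !Rabs_mult, (Rabs_right a), (Rabs_right w) by lra. right; ring.
Qed.

Lemma FF_z0 Q a B : Hyp Q -> FF Q a 0 B = tanh B * (a * EW Q).
Proof.
  intros HQ. unfold FF, EW.
  rewrite <- (Expect_scal Q (fun w => w) a HQ Good_id).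
  rewrite <- (Expect_scal Q (fun w => a * w) (tanh B) HQ) by good.
  apply Expect_ext; auto. apply Good_gF. good. intros w _. unfold gF. f_equal. f_equal. ring.
Qed.

Lemma FF_le Q a z B : Hyp Q -> 0 <= a -> FF Q a z B <= a * EW Q.
Proof.
  intros HQ Ha. unfold FF, EW. rewrite <- (Expect_scal Q (fun w => w) a HQ Good_id).
  apply Expect_le; auto. apply Good_gF. good. intros w Hw. unfold gF.
  pose proof (tanh_bound (a * w * z + B)). assert (0 <= a * w) by nra. nra.
Qed.

Lemma tanh_pos x : 0 < x -> 0 < tanh x.
Proof.
  intro Hx. rewrite tanh_exp. assert (1 < exp x) by (rewrite <- exp_0; apply exp_increasing; lra).
  apply Rdiv_lt_0_compat; nra.
Qed.

Lemma fix_exists Q a B : Hyp Q -> 0 < a -> a ^ 2 * EW2 Q < 1 -> 0 < B ->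
  exists z, 0 < z /\ z = FF Q a z B.
Proof.
  intros HQ Ha HS HB. pose proof (EW_pos Q HQ) as Hm.
  set (phi := fun z => z - FF Q a z B).
  assert (Hc : continuity phi).
  { intros x eps He. exists (eps / 2). split; [lra|]. intros y [_ Hy]. simpl in *. unfold R_dist in *.
    unfold phi. pose proof (FF_lipz Q a y x B HQ ltac:(lra)).
    assert (0 <= a ^ 2 * EW2 Q) by (pose proof (EW2_ge Q HQ); nra).
    replace (y - FF Q a y B - (x - FF Q a x B)) with ((y - x) - (FF Q a y B - FF Q a x B)) by ring.
    eapply Rle_lt_trans. apply Rabs_triang. rewrite Rabs_Ropp.
    pose proof (Rabs_pos (y - x)). nra. }
  assert (H0 : phi 0 < 0).
  { unfold phi. rewrite FF_z0 by auto. pose proof (tanh_pos B HB). assert (0 < a * EW Q) by nra. nra. }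
  assert (H1 : 0 < phi (a * EW Q + 1)).
  { unfold phi. pose proof (FF_le Q a (a * EW Q + 1) B HQ ltac:(lra)). lra. }
  destruct (IVT phi 0 (a * EW Q + 1) Hc ltac:(nra) H0 H1) as [z [Hz Hz0]].
  exists z. unfold phi in Hz0. split; [|lra].
  destruct (Req_dec z 0) as [E|E]; [|lra]. subst. unfold phi in H0. lra.
Qed.

Lemma fix_unique Q a B z1 z2 : Hyp Q -> 0 <= a -> a ^ 2 * EW2 Q < 1 ->
  z1 = FF Q a z1 B -> z2 = FF Q a z2 B -> z1 = z2.
Proof.
  intros HQ Ha HS H1 H2. pose proof (FF_lipz Q a z1 z2 B HQ Ha).
  rewrite <- H1, <- H2 in H. pose proof (Rabs_pos (z1 - z2)).
  assert (Rabs (z1 - z2) = 0) by nra. apply Rminus_diag_uniq. apply Rabs_eq_0. auto.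
Qed.

Lemma zstar_spec Q beta B : Hyp Q -> 0 < alpha Q beta -> alpha Q beta ^ 2 * EW2 Q < 1 -> 0 < B ->
  0 < zstar Q beta B /\ zstar Q beta B = FF Q (alpha Q beta) (zstar Q beta B) B.
Proof.
  intros HQ Ha HS HB. unfold zstar. apply epsilon_spec.
  apply (fix_exists Q (alpha Q beta) B); auto.
Qed.

Lemma sech_bound x : 0 <= 1 - tanh x ^ 2 <= 1.
Proof. pose proof (tanh_bound x). nra. Qed.

Lemma Good_MM a z B : Good (fun w => tanh (a * w * z + B)).
Proof.
  apply (Good_of _ 1 0 0); try lra. loclip. intros w _.
  pose proof (tanh_bound (a * w * z + B)). unfold Rabs; destruct Rcase_abs; nra.
Qed.
Lemma Good_sech a z B : Good (fun w => 1 - tanh (a * w * z + B) ^ 2).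
Proof.
  apply (Good_of _ 1 0 0); try lra. loclip. intros w _.
  pose proof (sech_bound (a * w * z + B)). rewrite Rabs_right by lra. nra.
Qed.
Lemma Good_sech1 a z B : Good (fun w => (1 - tanh (a * w * z + B) ^ 2) * (a * w)).
Proof.
  apply (Good_of _ 0 (Rabs a) 0); try lra. loclip. apply Rabs_pos. intros w Hw.
  pose proof (sech_bound (a * w * z + B)). rewrite Rabs_mult, Rabs_mult, (Rabs_right w), (Rabs_right (1 - _)) by lra.
  pose proof (Rabs_pos a).
  assert ((1 - tanh (a * w * z + B) ^ 2) * (Rabs a * w) <= 1 * (Rabs a * w)) by (apply Rmult_le_compat_r; nra). lra.
Qed.
Lemma Good_sech2 a z B : Good (fun w => (1 - tanh (a * w * z + B) ^ 2) * (a * w) ^ 2).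
Proof.
  apply (Good_of _ 0 0 (a ^ 2)); try lra. loclip. nra. intros w Hw.
  pose proof (sech_bound (a * w * z + B)). rewrite Rabs_mult, (Rabs_right ((a * w) ^ 2)), (Rabs_right (1 - _)) by (try apply Rle_ge, pow2_ge_0; lra).
  assert ((1 - tanh (a * w * z + B) ^ 2) * (a * w) ^ 2 <= 1 * (a * w) ^ 2) by (apply Rmult_le_compat_r; [apply pow2_ge_0| lra]).
  nra.
Qed.

Ltac goodx :=
  first [ apply Good_MM | apply Good_sech | apply Good_sech1 | apply Good_sech2 | apply Good_gF
        | apply Good_id | apply Good_sq |
  lazymatch goal with
  | |- Good (Rmult ?c) => apply (Good_scal (fun w => w) c); apply Good_id
  | |- Good (fun w => @?f w + @?g w) => apply (Good_add f g); goodx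
  | |- Good (fun w => @?f w - @?g w) => apply (Good_sub f g); goodx
  | |- Good (fun w => ?c * @?g w) => apply (Good_scal g c); goodx
  | |- Good (fun w => ?c) => apply Good_const
  end ].

Definition tt Q a z B := Expect Q (fun w => 1 - tanh (a * w * z + B) ^ 2).
Definition ss Q a z B := Expect Q (fun w => (1 - tanh (a * w * z + B) ^ 2) * (a * w)).
Definition pp Q a z B := Expect Q (fun w => (1 - tanh (a * w * z + B) ^ 2) * (a * w) ^ 2).
Definition MM Q a z B := Expect Q (fun w => tanh (a * w * z + B)).

Lemma pp_bounds Q a z B : Hyp Q -> 0 <= pp Q a z B <= a ^ 2 * EW2 Q.
Proof.
  intros HQ. unfold pp, EW2. split.
  - rewrite <- (Expect_const Q 0 HQ). apply Expect_le; auto. goodx. goodx.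
    intros w _. pose proof (sech_bound (a * w * z + B)). pose proof (pow2_ge_0 (a * w)). nra.
  - rewrite <- Expect_scal by (auto; goodx). apply Expect_le; auto. goodx. goodx.
    intros w _. pose proof (sech_bound (a * w * z + B)). pose proof (pow2_ge_0 (a * w)).
    replace (a ^ 2 * w ^ 2) with ((a * w) ^ 2) by ring. nra.
Qed.

Lemma ss_bounds Q a z B : Hyp Q -> 0 <= a -> 0 <= ss Q a z B <= a * EW Q.
Proof.
  intros HQ Ha. unfold ss, EW. split.
  - rewrite <- (Expect_const Q 0 HQ). apply Expect_le; auto. goodx. goodx.
    intros w Hw. pose proof (sech_bound (a * w * z + B)). assert (0 <= a * w) by nra. nra.
  - rewrite <- Expect_scal by (auto; goodx). apply Expect_le; auto. goodx. goodx.
    intros w Hw. pose proof (sech_bound (a * w * z + B)). assert (0 <= a * w) by nra. nra.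
Qed.

Lemma M_expand Q a z B z' B' : Hyp Q -> 0 <= a ->
  Rabs (MM Q a z' B' - MM Q a z B - (z' - z) * ss Q a z B - (B' - B) * tt Q a z B)
  <= 4 * (a ^ 2 * EW2 Q * (z' - z) ^ 2 + (B' - B) ^ 2).
Proof.
  intros HQ Ha. unfold MM, ss, tt.
  set (dz := z' - z). set (h := B' - B).
  rewrite <- (Expect_scal Q _ dz) by (auto; goodx). rewrite <- (Expect_scal Q _ h) by (auto; goodx).
  rewrite <- !Expect_sub by (auto; goodx).
  replace (4 * (a ^ 2 * EW2 Q * dz ^ 2 + h ^ 2)) with (Expect Q (fun w => (4 * a ^ 2 * dz ^ 2) * w ^ 2 + 4 * h ^ 2)).
  2: { rewrite Expect_add, Expect_scal, Expect_const by (auto; goodx). unfold EW2. ring. }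
  apply Expect_abs; auto. goodx. goodx.
  intros w Hw.
  replace (a * w * z' + B') with ((a * w * z + B) + (a * w * dz + h)) by (unfold dz, h; ring).
  set (x := a * w * z + B). set (D := a * w * dz + h).
  replace (tanh (x + D) - tanh x - dz * ((1 - tanh x ^ 2) * (a * w)) - h * (1 - tanh x ^ 2))
    with (tanh (x + D) - tanh x - (1 - tanh x ^ 2) * D) by (unfold D; ring).
  eapply Rle_trans. apply tanh_taylor. unfold D.
  pose proof (pow2_ge_0 (a * w * dz - h)).
  replace (4 * a ^ 2 * dz ^ 2 * w ^ 2 + 4 * h ^ 2) with (4 * ((a * w * dz) ^ 2 + h ^ 2)) by ring.
  nra.
Qed.

Lemma D_bound a w dz h L : 0 <= a -> 0 <= w -> 0 <= L -> Rabs dz <= L * Rabs h ->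
  Rabs (a * w * dz + h) <= (a * w * L + 1) * Rabs h.
Proof.
  intros. eapply Rle_trans. apply Rabs_triang. rewrite Rabs_mult, (Rabs_right (a * w)) by nra.
  assert (0 <= a * w) by nra.
  assert (a * w * Rabs dz <= a * w * (L * Rabs h)) by (apply Rmult_le_compat_l; auto). nra.
Qed.

Lemma F_expand Q a L : Hyp Q -> 0 < a -> 0 <= L -> forall eta, 0 < eta -> exists delta, 0 < delta /\
  forall z B z' B', Rabs (z' - z) <= L * Rabs (B' - B) -> Rabs (B' - B) < delta ->
  Rabs (FF Q a z' B' - FF Q a z B - (z' - z) * pp Q a z B - (B' - B) * ss Q a z B) <= 3 * eta * Rabs (B' - B).
Proof.
  intros HQ Ha HL eta Heta.
  set (C := 2 * a ^ 2 * L + 2 * a). assert (HC : 0 <= C) by (unfold C; nra).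
  destruct (Expect_tail Q C eta HQ HC Heta) as [K [HK Htail]].
  set (k := 2 * (a * K * L + 1) ^ 2 * (a * K)).
  assert (Hk : 0 <= k) by (unfold k; pose proof (pow2_ge_0 (a * K * L + 1)); assert (0 <= a * K) by nra; apply Rmult_le_pos; [lra|auto]).
  exists (eta / (k + 1)). split. apply Rdiv_lt_0_compat; lra.
  intros z B z' B' Hz Hh.
  set (dz := z' - z) in *. set (h := B' - B) in *.
  destruct (Req_dec h 0) as [H0|H0].
  { assert (dz = 0). { rewrite H0, Rabs_R0, Rmult_0_r in Hz. pose proof (Rabs_pos dz). apply Rabs_eq_0. lra. }
    replace z' with z by (unfold dz in H; lra). replace B' with B by (unfold h in H0; lra).
    rewrite H0, H. replace (FF Q a z B - FF Q a z B - 0 * pp Q a z B - 0 * ss Q a z B) with 0 by ring.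
    rewrite !Rabs_R0. lra. }
  assert (Hh0 : 0 < Rabs h) by (apply Rabs_pos_lt; auto).
  set (rF := fun w => tanh (a * w * z' + B') * (a * w) - tanh (a * w * z + B) * (a * w)
     - (dz * ((1 - tanh (a * w * z + B) ^ 2) * (a * w) ^ 2) + h * ((1 - tanh (a * w * z + B) ^ 2) * (a * w)))).
  assert (GrF : Good rF) by (unfold rF; goodx).
  assert (ErF : Expect Q rF = FF Q a z' B' - FF Q a z B - dz * pp Q a z B - h * ss Q a z B).
  { unfold rF, FF, pp, ss.
    rewrite Expect_sub, Expect_sub, Expect_add, Expect_scal, Expect_scal by (auto; goodx).
    unfold gF. ring. }
  assert (Hpt : forall w, 0 <= w -> rF w = (tanh ((a * w * z + B) + (a * w * dz + h)) - tanh (a * w * z + B)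
          - (1 - tanh (a * w * z + B) ^ 2) * (a * w * dz + h)) * (a * w)).
  { intros w Hw. unfold rF. replace (a * w * z + B + (a * w * dz + h)) with (a * w * z' + B') by (unfold dz, h; ring). ring. }
  set (g := fun w => / Rabs h * rF w).
  assert (Gg : Good g) by (unfold g; apply Good_scal; auto).
  assert (Eg : Expect Q g = / Rabs h * Expect Q rF) by (unfold g; apply Expect_scal; auto).
  assert (Hg1 : forall w, 0 <= w -> Rabs (g w) <= C * (1 + w ^ 2)).
  { intros w Hw. unfold g. rewrite Hpt by auto. rewrite Rabs_mult, Rabs_mult, Rabs_inv, Rabs_Rabsolu.
    pose proof (tanh_taylor1 (a * w * z + B) (a * w * dz + h)) as T1.
    pose proof (D_bound a w dz h L ltac:(lra) Hw HL Hz) as DB.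
    rewrite (Rabs_right (a * w)) by nra.
    set (R1 := Rabs (tanh (a * w * z + B + (a * w * dz + h)) - tanh (a * w * z + B) - (1 - tanh (a * w * z + B) ^ 2) * (a * w * dz + h))) in *.
    assert (R1 <= 2 * ((a * w * L + 1) * Rabs h)) by lra.
    assert (/ Rabs h * R1 <= 2 * (a * w * L + 1)).
    { apply Rmult_le_reg_l with (Rabs h); auto. rewrite <- Rmult_assoc, Rinv_r by lra. lra. }
    assert (0 <= R1) by (unfold R1; apply Rabs_pos). assert (0 <= / Rabs h * R1) by (apply Rmult_le_pos; [left; apply Rinv_0_lt_compat; auto | auto]).
    assert (/ Rabs h * R1 * (a * w) <= 2 * (a * w * L + 1) * (a * w)) by (apply Rmult_le_compat_r; nra).
    unfold C. assert (w <= 1 + w ^ 2) by nra.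
    assert (2 * (a * w * L + 1) * (a * w) = 2 * a^2 * L * w^2 + 2 * a * w) by ring.
    assert (2 * a^2 * L * w^2 <= 2 * a^2 * L * (1 + w^2)) by (assert (0 <= 2 * a^2 * L) by nra; nra).
    assert (2 * a * w <= 2 * a * (1 + w^2)) by nra.
    nra. }
  assert (Hg2 : forall w, 0 <= w <= K -> Rabs (g w) <= eta).
  { intros w Hw. unfold g. rewrite Hpt by lra. rewrite Rabs_mult, Rabs_mult, Rabs_inv, Rabs_Rabsolu.
    pose proof (tanh_taylor (a * w * z + B) (a * w * dz + h)) as T2.
    pose proof (D_bound a w dz h L ltac:(lra) ltac:(lra) HL Hz) as DB.
    rewrite (Rabs_right (a * w)) by nra.
    set (R1 := Rabs (tanh (a * w * z + B + (a * w * dz + h)) - tanh (a * w * z + B) - (1 - tanh (a * w * z + B) ^ 2) * (a * w * dz + h))) in *.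
    assert (HaKL : 0 <= a * K * L) by (apply Rmult_le_pos; [nra|lra]).
    assert (HD2 : (a * w * dz + h) ^ 2 <= ((a * K * L + 1) * Rabs h) ^ 2).
    { assert (HX : Rabs (a * w * dz + h) <= (a * K * L + 1) * Rabs h).
      { eapply Rle_trans. apply DB. apply Rmult_le_compat_r. apply Rabs_pos.
        assert (a * w * L <= a * K * L) by (apply Rmult_le_compat_r; nra). lra. }
      rewrite <- (pow2_abs (a * w * dz + h)). pose proof (Rabs_pos (a * w * dz + h)). nra. }
    assert (R1 <= 2 * (a * K * L + 1) ^ 2 * Rabs h ^ 2) by (replace (2 * (a * K * L + 1) ^ 2 * Rabs h ^ 2) with (2 * ((a * K * L + 1) * Rabs h) ^ 2) by ring; lra).
    assert (/ Rabs h * R1 <= 2 * (a * K * L + 1) ^ 2 * Rabs h).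
    { apply Rmult_le_reg_l with (Rabs h); auto. rewrite <- Rmult_assoc, Rinv_r by lra. nra. }
    assert (0 <= R1) by (unfold R1; apply Rabs_pos). assert (0 <= / Rabs h * R1) by (apply Rmult_le_pos; [left; apply Rinv_0_lt_compat; auto | auto]).
    assert (/ Rabs h * R1 * (a * w) <= 2 * (a * K * L + 1) ^ 2 * Rabs h * (a * K)) by (apply Rmult_le_compat; nra).
    assert (k * Rabs h <= eta).
    { assert (k * Rabs h <= (k + 1) * (eta / (k + 1))) by (apply Rmult_le_compat; lra).
      replace ((k + 1) * (eta / (k + 1))) with eta in H5 by (field; lra). lra. }
    unfold k in H5. nra. }
  specialize (Htail g (proj1 Gg) Hg1 Hg2). rewrite Eg, Rabs_mult, Rabs_inv, Rabs_Rabsolu in Htail.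
  rewrite <- ErF.
  assert (Rabs (Expect Q rF) = Rabs h * (/ Rabs h * Rabs (Expect Q rF))) by (field; lra).
  rewrite H. pose proof (Rabs_pos (Expect Q rF)).
  assert (Rabs h * (/ Rabs h * Rabs (Expect Q rF)) <= Rabs h * (3 * eta)) by (apply Rmult_le_compat_l; lra).
  lra.
Qed.

Lemma z_lip Q a z B z' B' : Hyp Q -> 0 <= a -> a ^ 2 * EW2 Q < 1 ->
  z = FF Q a z B -> z' = FF Q a z' B' ->
  Rabs (z' - z) <= a * EW Q / (1 - a ^ 2 * EW2 Q) * Rabs (B' - B).
Proof.
  intros HQ Ha HS H1 H2.
  pose proof (FF_lipz Q a z' z B' HQ Ha). pose proof (FF_lipB Q a z B' B HQ Ha).
  assert (Rabs (z' - z) <= a ^ 2 * Rabs (z' - z) * EW2 Q + a * Rabs (B' - B) * EW Q).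
  { replace (z' - z) with (FF Q a z' B' - FF Q a z B) at 1 by lra.
    replace (FF Q a z' B' - FF Q a z B) with ((FF Q a z' B' - FF Q a z B') + (FF Q a z B' - FF Q a z B)) by ring.
    eapply Rle_trans. apply Rabs_triang. lra. }
  apply Rmult_le_reg_l with (1 - a ^ 2 * EW2 Q). lra.
  replace ((1 - a ^ 2 * EW2 Q) * (a * EW Q / (1 - a ^ 2 * EW2 Q) * Rabs (B' - B))) with (a * Rabs (B' - B) * EW Q) by (field; lra).
  lra.
Qed.

Definition chiF Q a z B := tt Q a z B + ss Q a z B ^ 2 / (1 - pp Q a z B).

Lemma M_deriv Q a zf B : Hyp Q -> 0 < a -> a ^ 2 * EW2 Q < 1 ->
  (forall b, 0 < b -> zf b = FF Q a (zf b) b) -> 0 < B ->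
  derivable_pt_lim (fun b => MM Q a (zf b) b) B (chiF Q a (zf B) B).
Proof.
  intros HQ Ha HS Hfix HB eps Heps.
  set (m := EW Q) in *. set (s2 := EW2 Q) in *. set (S := a ^ 2 * s2) in *.
  pose proof (EW_pos Q HQ) as Hm. fold m in Hm.
  assert (Hs2 : 0 <= s2) by (pose proof (EW2_ge Q HQ); fold m s2 in H; nra).
  set (L := a * m / (1 - S)).
  assert (HL : 0 <= L) by (unfold L; apply Rle_mult_inv_pos; [nra|lra]).
  set (eta := eps * (1 - S) / (6 * (a * m + 1))).
  assert (Heta : 0 < eta) by (unfold eta; apply Rdiv_lt_0_compat; [nra|nra]).
  destruct (F_expand Q a L HQ Ha HL eta Heta) as [d1 [Hd1 P1]].
  set (C2 := 4 * (a ^ 2 * s2 * L ^ 2 + 1)).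
  assert (HC2 : 0 < C2) by (unfold C2; assert (0 <= a ^ 2 * s2 * L ^ 2) by (apply Rmult_le_pos; nra); lra).
  set (d := Rmin d1 (Rmin (B / 2) (eps / (2 * C2)))).
  assert (Hd : 0 < d /\ d <= d1 /\ d <= B / 2 /\ d <= eps / (2 * C2)).
  { destruct (Rmin_spec2 (B/2) (eps / (2 * C2))) as [a1 [a2 a3]].
    destruct (Rmin_spec2 d1 (Rmin (B / 2) (eps / (2 * C2)))) as [b1 [b2 b3]]. fold d in b1, b2, b3.
    assert (0 < eps / (2 * C2)) by (apply Rdiv_lt_0_compat; lra).
    destruct a3 as [a3|a3]; destruct b3 as [b3|b3]; rewrite ?a3 in *; rewrite ?b3 in *; repeat split; lra. }
  exists (mkposreal d (proj1 Hd)). intros h Hh0 Hh. simpl in Hh.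
  set (z := zf B). set (z' := zf (B + h)).
  assert (Hz : z = FF Q a z B) by (apply Hfix; auto).
  assert (Hz' : z' = FF Q a z' (B + h)) by (apply Hfix; apply Rabs_def2 in Hh; lra).
  pose proof (z_lip Q a z B z' (B + h) HQ ltac:(lra) HS Hz Hz') as Hlip.
  replace (B + h - B) with h in Hlip by ring. fold m s2 S L in Hlip.
  specialize (P1 z B z' (B + h)). replace (B + h - B) with h in P1 by ring.
  specialize (P1 Hlip ltac:(lra)). rewrite <- Hz, <- Hz' in P1.
  pose proof (M_expand Q a z B z' (B + h) HQ ltac:(lra)) as P2.
  replace (B + h - B) with h in P2 by ring. fold s2 in P2.
  unfold chiF.
  set (p := pp Q a z B) in *. set (s := ss Q a z B) in *. set (t := tt Q a z B) in *.
  pose proof (pp_bounds Q a z B HQ) as Hp. fold p s2 S in Hp.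
  pose proof (ss_bounds Q a z B HQ ltac:(lra)) as Hsb. fold s m in Hsb.
  set (dz := z' - z) in *.
  set (e1 := dz - dz * p - h * s) in *.
  set (e2 := MM Q a z' (B + h) - MM Q a z B - dz * s - h * t) in *.
  assert (E : (MM Q a z' (B + h) - MM Q a z B) / h - (t + s ^ 2 / (1 - p)) = (s * e1 / (1 - p) + e2) / h).
  { unfold e1, e2, dz. field. split; lra. }
  rewrite E. unfold Rdiv at 1. rewrite Rabs_mult, Rabs_inv.
  assert (Hh1 : 0 < Rabs h) by (apply Rabs_pos_lt; auto).
  apply Rmult_lt_reg_l with (Rabs h); auto. rewrite <- Rmult_assoc, (Rmult_comm (Rabs h)), Rmult_assoc, Rinv_r, Rmult_1_r by lra.
  eapply Rle_lt_trans. apply Rabs_triang.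
  assert (A1 : Rabs (s * e1 / (1 - p)) <= a * m * (3 * eta * Rabs h) / (1 - S)).
  { unfold Rdiv. rewrite !Rabs_mult, Rabs_inv, (Rabs_right s), (Rabs_right (1 - p)) by lra.
    assert (/ (1 - p) <= / (1 - S)) by (apply Rinv_le_contravar; lra).
    assert (0 < / (1 - S)) by (apply Rinv_0_lt_compat; lra).
    assert (0 < / (1 - p)) by (apply Rinv_0_lt_compat; lra).
    pose proof (Rabs_pos e1).
    assert (s * Rabs e1 <= a * m * (3 * eta * Rabs h)) by (apply Rmult_le_compat; lra).
    apply Rmult_le_compat; [apply Rmult_le_pos; lra | lra | lra | lra]. }
  assert (A2 : Rabs e2 <= C2 * Rabs h ^ 2).
  { eapply Rle_trans. apply P2. unfold C2.
    assert (dz ^ 2 <= L ^ 2 * Rabs h ^ 2).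
    { rewrite <- (pow2_abs dz). pose proof (Rabs_pos dz). pose proof (Rabs_pos h). nra. }
    rewrite <- (pow2_abs h).
    assert (0 <= a ^ 2 * s2) by (apply Rmult_le_pos; nra). nra. }
  assert (A3 : a * m * (3 * eta * Rabs h) / (1 - S) <= eps / 2 * Rabs h).
  { assert (0 <= a * m) by nra. pose proof (Rabs_pos h).
    replace (a * m * (3 * eta * Rabs h) / (1 - S)) with (eps / 2 * Rabs h * (a * m / (a * m + 1))) by (unfold eta; field; lra).
    assert (a * m / (a * m + 1) <= 1) by (apply Rmult_le_reg_r with (a * m + 1); [lra|]; unfold Rdiv; rewrite Rmult_assoc, Rinv_l by lra; lra).
    assert (0 <= eps / 2 * Rabs h) by (apply Rmult_le_pos; lra).
    nra. }
  assert (A4 : C2 * Rabs h ^ 2 < eps / 2 * Rabs h).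
  { assert (C2 * Rabs h < eps / 2).
    { apply Rlt_le_trans with (C2 * (eps / (2 * C2))). apply Rmult_lt_compat_l; lra. right; field; lra. }
    simpl. nra. }
  lra.
Qed.

Lemma combo t s p s0 S e1 e2 e3 : 0 <= s <= s0 -> 0 <= p <= S -> S < 1 ->
  Rabs (t - 1) <= e1 -> Rabs (s - s0) <= e2 -> Rabs (p - S) <= e3 ->
  Rabs (t + s ^ 2 / (1 - p) - (1 + s0 ^ 2 / (1 - S))) <= e1 + 2 * s0 * e2 / (1 - S) + s0 ^ 2 * e3 / (1 - S) ^ 2.
Proof.
  intros Hs Hp HS H1 H2 H3.
  replace (t + s ^ 2 / (1 - p) - (1 + s0 ^ 2 / (1 - S))) with
    ((t - 1) + ((s - s0) * (s + s0) * (1 - S) + s0 ^ 2 * (p - S)) / ((1 - p) * (1 - S))) by (field; lra).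
  eapply Rle_trans. apply Rabs_triang.
  assert (Rabs (((s - s0) * (s + s0) * (1 - S) + s0 ^ 2 * (p - S)) / ((1 - p) * (1 - S)))
    <= 2 * s0 * e2 / (1 - S) + s0 ^ 2 * e3 / (1 - S) ^ 2).
  { unfold Rdiv. rewrite Rabs_mult, Rabs_inv, (Rabs_right ((1 - p) * (1 - S))) by nra.
    assert (/ ((1 - p) * (1 - S)) <= / ((1 - S) * (1 - S))) by (apply Rinv_le_contravar; nra).
    assert (0 < / ((1 - S) * (1 - S))) by (apply Rinv_0_lt_compat; nra).
    assert (Rabs ((s - s0) * (s + s0) * (1 - S) + s0 ^ 2 * (p - S)) <= e2 * (2 * s0) * (1 - S) + s0 ^ 2 * e3).
    { eapply Rle_trans. apply Rabs_triang. rewrite !Rabs_mult, (Rabs_right (s + s0)), (Rabs_right (1 - S)), (Rabs_right (s0 ^ 2)) by nra.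
      pose proof (Rabs_pos (s - s0)). pose proof (Rabs_pos (p - S)).
      assert (Rabs (s - s0) * (s + s0) <= e2 * (2 * s0)) by (apply Rmult_le_compat; lra).
      assert (Rabs (s - s0) * (s + s0) * (1 - S) <= e2 * (2 * s0) * (1 - S)) by (apply Rmult_le_compat_r; lra).
      assert (s0 ^ 2 * Rabs (p - S) <= s0 ^ 2 * e3) by (apply Rmult_le_compat_l; nra). lra. }
    pose proof (Rabs_pos ((s - s0) * (s + s0) * (1 - S) + s0 ^ 2 * (p - S))).
    eapply Rle_trans. apply Rmult_le_compat; [lra | left; apply Rinv_0_lt_compat; nra | eassumption | eassumption].
    right. field. lra. }
  lra.
Qed.

Lemma small_lin c tgt : 0 <= c -> 0 < tgt -> exists d, 0 < d /\ forall B, 0 < B < d -> c * B < tgt.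
Proof.
  intros Hc Ht. exists (tgt / (c + 1)). split. apply Rdiv_lt_0_compat; lra.
  intros B HB. apply Rle_lt_trans with ((c + 1) * B). nra.
  apply Rlt_le_trans with ((c + 1) * (tgt / (c + 1))). apply Rmult_lt_compat_l; lra. right; field; lra.
Qed.

Lemma Good_tanh2 a z B : Good (fun w => tanh (a * w * z + B) ^ 2).
Proof.
  apply (Good_of _ 1 0 0); try lra. loclip. intros w _.
  pose proof (tanh_bound (a * w * z + B)). rewrite Rabs_right by (apply Rle_ge, pow2_ge_0). nra.
Qed.

Lemma tanh2_le x : tanh x ^ 2 <= x ^ 2.
Proof. pose proof (tanh_abs_le x). rewrite <- (pow2_abs x), <- (pow2_abs (tanh x)). pose proof (Rabs_pos (tanh x)). nra. Qed.
Lemma tanh2_le_abs x : tanh x ^ 2 <= Rabs x.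
Proof. pose proof (tanh_abs_le x). pose proof (tanh_bound x). rewrite <- (pow2_abs (tanh x)). pose proof (Rabs_pos (tanh x)).
  assert (Rabs (tanh x) <= 1) by (unfold Rabs; destruct Rcase_abs; lra). nra. Qed.

Lemma chi_limit Q a zf : Hyp Q -> 0 < a -> a ^ 2 * EW2 Q < 1 ->
  (forall b, 0 < b -> zf b = FF Q a (zf b) b) ->
  forall eps, 0 < eps -> exists d, 0 < d /\ forall B, 0 < B < d ->
    Rabs (chiF Q a (zf B) B - (1 + (a * EW Q) ^ 2 / (1 - a ^ 2 * EW2 Q))) < eps.
Proof.
  intros HQ Ha HS Hfix eps Heps.
  set (m := EW Q) in *. set (s2 := EW2 Q) in *. set (S := a ^ 2 * s2) in *.
  pose proof (EW_pos Q HQ) as Hm. fold m in Hm.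
  assert (Hs2 : 0 <= s2) by (pose proof (EW2_ge Q HQ); fold m s2 in H; nra).
  assert (HS0 : 0 <= S) by (unfold S; apply Rmult_le_pos; nra).
  set (L := a * m / (1 - S)).
  assert (HL : 0 <= L) by (unfold L; apply Rle_mult_inv_pos; [nra|lra]).
  set (s0 := a * m). assert (Hs0 : 0 < s0) by (unfold s0; nra).
  set (e1 := eps / 4). set (e2 := eps / 4 * (1 - S) / (2 * s0)). set (e3 := eps / 4 * (1 - S) ^ 2 / s0 ^ 2).
  assert (He1 : 0 < e1) by (unfold e1; lra).
  assert (He2 : 0 < e2) by (unfold e2; apply Rdiv_lt_0_compat; nra).
  assert (He3 : 0 < e3) by (unfold e3; apply Rdiv_lt_0_compat; [apply Rmult_lt_0_compat; [lra|nra] | nra]).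
  assert (Hsum : e1 + 2 * s0 * e2 / (1 - S) + s0 ^ 2 * e3 / (1 - S) ^ 2 < eps).
  { replace (e1 + 2 * s0 * e2 / (1 - S) + s0 ^ 2 * e3 / (1 - S) ^ 2) with (3 * eps / 4).
    lra. unfold e1, e2, e3. field. lra. }
  destruct (Expect_tail Q (a ^ 2) (e3 / 3) HQ ltac:(nra) ltac:(lra)) as [K [HK Htail]].
  set (c1 := 2 * a ^ 2 * L ^ 2 * s2 + 2).
  set (c2 := a ^ 2 * L * s2 + a * m).
  set (c3 := (a * K * L + 1) ^ 2 * (a ^ 2 * K ^ 2)).
  assert (Hc1 : 0 <= c1) by (unfold c1; assert (0 <= a ^ 2 * L ^ 2 * s2) by (apply Rmult_le_pos; nra); lra).
  assert (Hc2 : 0 <= c2) by (unfold c2; assert (0 <= a ^ 2 * L * s2) by (apply Rmult_le_pos; [apply Rmult_le_pos|]; nra); nra).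
  assert (Hc3 : 0 <= c3) by (unfold c3; apply Rmult_le_pos; [apply pow2_ge_0 | apply Rmult_le_pos; apply pow2_ge_0]).
  destruct (small_lin c1 e1 Hc1 He1) as [d1 [Hd1 P1]].
  destruct (small_lin c2 e2 Hc2 He2) as [d2 [Hd2 P2]].
  destruct (small_lin c3 (e3 / 3) Hc3 ltac:(lra)) as [d3 [Hd3 P3]].
  exists (Rmin 1 (Rmin d1 (Rmin d2 d3))).
  split. { repeat (apply Rmin_glb_lt; auto); lra. }
  intros B [HB0 HB].
  pose proof (Rmin_l 1 (Rmin d1 (Rmin d2 d3))). pose proof (Rmin_r 1 (Rmin d1 (Rmin d2 d3))).
  pose proof (Rmin_l d1 (Rmin d2 d3)). pose proof (Rmin_r d1 (Rmin d2 d3)).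
  pose proof (Rmin_l d2 d3). pose proof (Rmin_r d2 d3).
  assert (Hb1 : B < 1) by lra. assert (Hb2 : B < d1) by lra. assert (Hb3 : B < d2) by lra. assert (Hb4 : B < d3) by lra.
  clear H H0 H1 H2 H3 H4 HB.
  specialize (P1 B (conj HB0 Hb2)). specialize (P2 B (conj HB0 Hb3)). specialize (P3 B (conj HB0 Hb4)).
  set (z := zf B).
  assert (Hz : z = FF Q a z B) by (apply Hfix; auto).
  assert (H00 : 0 = FF Q a 0 0) by (rewrite FF_z0, tanh_0 by auto; ring).
  pose proof (z_lip Q a 0 0 z B HQ ltac:(lra) HS H00 Hz) as Hzl. fold m s2 S L in Hzl.
  rewrite !Rminus_0_r, (Rabs_right B) in Hzl by lra.
  unfold chiF.
  pose proof (pp_bounds Q a z B HQ) as Hp. fold s2 S in Hp.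
  pose proof (ss_bounds Q a z B HQ ltac:(lra)) as Hsb. fold m s0 in Hsb.
  eapply Rle_lt_trans; [apply (combo _ _ _ _ _ e1 e2 e3); auto| exact Hsum].
  -
    unfold tt.
    replace (Expect Q (fun w => 1 - tanh (a * w * z + B) ^ 2) - 1) with (Expect Q (fun w => 1 - tanh (a * w * z + B) ^ 2 - 1))
      by (rewrite Expect_sub, Expect_const by (auto; goodx); reflexivity).
    left. eapply Rle_lt_trans; [|apply P1].
    replace (c1 * B) with (Expect Q (fun w => (2 * a ^ 2 * z ^ 2) * w ^ 2 + 2 * B ^ 2) + (2 * a ^ 2 * s2) * (L ^ 2 * B ^ 2 - z ^ 2) + (2 * a ^ 2 * s2 * L ^ 2) * (B - B ^ 2) + 2 * (B - B ^ 2)).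
    2: { rewrite Expect_add, Expect_scal, Expect_const by (auto; goodx). unfold c1, s2, EW2. ring. }
    assert (0 <= 2 * a ^ 2 * s2 * (L ^ 2 * B ^ 2 - z ^ 2)).
    { apply Rmult_le_pos. nra. rewrite <- (pow2_abs z). pose proof (Rabs_pos z). nra. }
    assert (0 <= 2 * (B - B ^ 2)) by nra.
    assert (0 <= (2 * a ^ 2 * s2 * L ^ 2) * (B - B ^ 2)) by (apply Rmult_le_pos; [apply Rmult_le_pos; nra|nra]).
    assert (Rabs (Expect Q (fun w => 1 - tanh (a * w * z + B) ^ 2 - 1)) <= Expect Q (fun w => (2 * a ^ 2 * z ^ 2) * w ^ 2 + 2 * B ^ 2)).
    { apply Expect_abs; auto. goodx. goodx. intros w Hw.
      replace (1 - tanh (a * w * z + B) ^ 2 - 1) with (- tanh (a * w * z + B) ^ 2) by ring.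
      rewrite Rabs_Ropp, Rabs_right by (apply Rle_ge, pow2_ge_0).
      eapply Rle_trans. apply tanh2_le. pose proof (pow2_ge_0 (a * w * z - B)). nra. }
    lra.
  -
    unfold ss, s0, m, EW. rewrite <- Expect_scal by (auto; goodx). rewrite <- Expect_sub by (auto; goodx).
    left. eapply Rle_lt_trans; [|apply P2]. fold m.
    apply Rle_trans with (Expect Q (fun w => (a ^ 2 * Rabs z) * w ^ 2 + (a * B) * w)).
    { apply Expect_abs; auto. goodx. goodx. intros w Hw.
      replace ((1 - tanh (a * w * z + B) ^ 2) * (a * w) - a * w) with (- (tanh (a * w * z + B) ^ 2 * (a * w))) by ring.
      rewrite Rabs_Ropp, Rabs_mult, Rabs_right, (Rabs_right (a * w)) by (try apply Rle_ge, pow2_ge_0; nra).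
      pose proof (tanh2_le_abs (a * w * z + B)).
      assert (Rabs (a * w * z + B) <= a * w * Rabs z + B).
      { eapply Rle_trans. apply Rabs_triang. rewrite Rabs_mult, (Rabs_right (a * w)), (Rabs_right B) by nra. lra. }
      assert (0 <= a * w) by nra.
      assert (tanh (a * w * z + B) ^ 2 * (a * w) <= (a * w * Rabs z + B) * (a * w)) by (apply Rmult_le_compat_r; lra).
      nra. }
    rewrite Expect_add, Expect_scal, Expect_scal by (auto; goodx). fold s2. unfold EW in m. fold m.
    unfold c2. assert (a ^ 2 * Rabs z * s2 <= a ^ 2 * (L * B) * s2).
    { apply Rmult_le_compat_r; auto. apply Rmult_le_compat_l; nra. }
    change (Expect Q (fun w => w ^ 2)) with s2. nra.
  -
    unfold pp, S, s2, EW2. rewrite <- Expect_scal by (auto; goodx). rewrite <- Expect_sub by (auto; goodx).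
    replace e3 with (3 * (e3 / 3)) by field.
    apply Htail.
    + assert (G : Good (fun w => (1 - tanh (a * w * z + B) ^ 2) * (a * w) ^ 2 - a ^ 2 * w ^ 2)) by goodx. apply G.
    + intros w Hw.
      replace ((1 - tanh (a * w * z + B) ^ 2) * (a * w) ^ 2 - a ^ 2 * w ^ 2) with (- (tanh (a * w * z + B) ^ 2 * (a ^ 2 * w ^ 2))) by ring.
      rewrite Rabs_Ropp, Rabs_right by (apply Rle_ge, Rmult_le_pos; [apply pow2_ge_0 | apply Rmult_le_pos; apply pow2_ge_0]).
      pose proof (tanh_bound (a * w * z + B)). pose proof (pow2_ge_0 w).
      assert (tanh (a * w * z + B) ^ 2 <= 1) by nra.
      assert (0 <= a ^ 2 * w ^ 2) by (apply Rmult_le_pos; apply pow2_ge_0).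
      assert (tanh (a * w * z + B) ^ 2 * (a ^ 2 * w ^ 2) <= 1 * (a ^ 2 * w ^ 2)) by (apply Rmult_le_compat_r; lra).
      assert (0 <= a ^ 2) by apply pow2_ge_0. nra.
    + intros w Hw.
      replace ((1 - tanh (a * w * z + B) ^ 2) * (a * w) ^ 2 - a ^ 2 * w ^ 2) with (- (tanh (a * w * z + B) ^ 2 * (a ^ 2 * w ^ 2))) by ring.
      rewrite Rabs_Ropp, Rabs_right by (apply Rle_ge, Rmult_le_pos; [apply pow2_ge_0 | apply Rmult_le_pos; apply pow2_ge_0]).
      left. eapply Rle_lt_trans; [|apply P3]. unfold c3.
      assert (X1 : Rabs (a * w * z + B) <= (a * K * L + 1) * B).
      { eapply Rle_trans. apply Rabs_triang. rewrite Rabs_mult, (Rabs_right (a * w)), (Rabs_right B) by nra.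
        pose proof (Rabs_pos z).
        assert (a * w * Rabs z <= a * K * (L * B)) by (apply Rmult_le_compat; [nra|lra|apply Rmult_le_compat_l; lra|lra]).
        replace ((a * K * L + 1) * B) with (a * K * (L * B) + B) by ring. lra. }
      assert (X2 : tanh (a * w * z + B) ^ 2 <= ((a * K * L + 1) * B) ^ 2).
      { eapply Rle_trans. apply tanh2_le. rewrite <- (pow2_abs (a * w * z + B)). pose proof (Rabs_pos (a * w * z + B)). nra. }
      assert (X3 : a ^ 2 * w ^ 2 <= a ^ 2 * K ^ 2).
      { apply Rmult_le_compat_l. nra. nra. }
      assert (X4 : tanh (a * w * z + B) ^ 2 * (a ^ 2 * w ^ 2) <= ((a * K * L + 1) * B) ^ 2 * (a ^ 2 * K ^ 2)).
      { apply Rmult_le_compat; try apply pow2_ge_0; try nra. }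
      assert (((a * K * L + 1) * B) ^ 2 * (a ^ 2 * K ^ 2) <= (a * K * L + 1) ^ 2 * (a ^ 2 * K ^ 2) * B).
      { replace (((a * K * L + 1) * B) ^ 2 * (a ^ 2 * K ^ 2)) with ((a * K * L + 1) ^ 2 * (a ^ 2 * K ^ 2) * (B * B)) by ring.
        apply Rmult_le_compat_l. unfold c3 in Hc3; lra. nra. }
      lra.
Qed.

Lemma cosh_ge1 x : 1 <= cosh x.
Proof.
  unfold cosh. rewrite exp_Ropp. assert (H := exp_pos x). set (e := exp x) in *.
  assert (e + / e - 2 = (e - 1) ^ 2 / e) by (field; lra).
  assert (0 <= (e - 1) ^ 2 / e) by (apply Rle_mult_inv_pos; [apply pow2_ge_0|lra]). lra.
Qed.

Theorem mainTheorem4 (Q : R -> R)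
  (HQ : is_quantile Q)
  (HW2 : exists m2, improper01 (fun u => Q u ^ 2) m2)
  (HW : exists m1, 0 < m1 /\ improper01 (fun u => Q u) m1) :
  exists (chi : R -> R -> R) (chi0 : R -> R),
    (forall beta B, 0 < beta < beta_c Q -> 0 < B ->
       derivable_pt_lim (fun b => Mtilde Q beta b) B (chi beta B)) /\
    (forall beta, 0 < beta < beta_c Q ->
       forall eps, 0 < eps -> exists d, 0 < d /\
         forall B, 0 < B < d -> Rabs (chi beta B - chi0 beta) < eps) /\
    (forall eps, 0 < eps -> exists d, 0 < d /\
       forall beta, beta_c Q - d < beta < beta_c Q ->
         Rabs (chi0 beta * (beta_c Q - beta)
               - (EW Q) ^ 2 / EW2 Q * tanh (beta_c Q)) < eps).
Proof.
  assert (HH : Hyp Q) by (split; [|split]; auto).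
  pose proof (EW_pos Q HH) as Hm. pose proof (EW2_ge Q HH) as Hs2.
  set (m := EW Q) in *. set (s2 := EW2 Q) in *.
  assert (Hs2p : 0 < s2) by nra.
  assert (Hsc : sinh (beta_c Q) = m / s2).
  { unfold beta_c, nu. rewrite sinh_arcsinh. fold m s2. field. lra. }
  assert (Hbc : 0 < beta_c Q).
  { rewrite <- arcsinh_0. unfold beta_c. apply arcsinh_lt. unfold nu. fold m s2.
    apply Rinv_0_lt_compat. apply Rdiv_lt_0_compat; lra. }
  assert (Hal : forall beta, 0 < beta < beta_c Q ->
     0 < alpha Q beta /\ alpha Q beta ^ 2 = sinh beta / m /\ alpha Q beta ^ 2 * s2 < 1).
  { intros beta [H1 H2].
    assert (Hsb : 0 < sinh beta) by (rewrite <- sinh_0; apply sinh_lt; auto).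
    assert (Hsb2 : sinh beta < m / s2) by (rewrite <- Hsc; apply sinh_lt; auto).
    assert (Hq : 0 < sinh beta / m) by (apply Rdiv_lt_0_compat; auto).
    unfold alpha. fold m. split; [apply sqrt_lt_R0; auto|].
    assert (E : sqrt (sinh beta / m) ^ 2 = sinh beta / m) by (simpl; rewrite Rmult_1_r; apply sqrt_sqrt; lra).
    split; auto. rewrite E.
    apply Rmult_lt_reg_r with (m / s2). apply Rdiv_lt_0_compat; lra.
    replace (sinh beta / m * s2 * (m / s2)) with (sinh beta) by (field; lra). lra. }
  exists (fun beta B => chiF Q (alpha Q beta) (zstar Q beta B) B).
  exists (fun beta => 1 + sinh beta * m / (1 - sinh beta * s2 / m)).
  split; [|split].
  - intros beta B Hb HB. destruct (Hal beta Hb) as [Ha [Ha2 HS]].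
    apply (M_deriv Q (alpha Q beta) (zstar Q beta) B HH Ha HS); auto.
    intros b Hb0. apply (zstar_spec Q beta b HH Ha HS Hb0).
  - intros beta Hb eps Heps. destruct (Hal beta Hb) as [Ha [Ha2 HS]].
    destruct (chi_limit Q (alpha Q beta) (zstar Q beta) HH Ha HS) with (eps := eps) as [d [Hd P]]; auto.
    { intros b Hb0. apply (zstar_spec Q beta b HH Ha HS Hb0). }
    exists d. split; auto. intros B HB. specialize (P B HB). fold m s2 in P.
    replace (1 + sinh beta * m / (1 - sinh beta * s2 / m)) with (1 + (alpha Q beta * m) ^ 2 / (1 - alpha Q beta ^ 2 * s2)); auto.
    rewrite Rpow_mult_distr, Ha2. field. split; [lra|].
    rewrite Ha2 in HS. assert (sinh beta / m * s2 * m = sinh beta * s2) by (field; lra).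
    assert (sinh beta / m * s2 * m < 1 * m) by (apply Rmult_lt_compat_r; lra). lra.
  - intros eps Heps.
    set (bc := beta_c Q) in *. set (cc := cosh bc). set (sc := m / s2) in *. set (kap := m ^ 2 / s2).
    assert (Hcc : 1 <= cc) by apply cosh_ge1.
    assert (Hsc0 : 0 < sc) by (unfold sc; apply Rdiv_lt_0_compat; lra).
    assert (Hkap : 0 < kap) by (unfold kap; apply Rdiv_lt_0_compat; nra).
    set (e := Rmin (cc / 2) (eps * cc ^ 2 / (4 * (kap * sc + 1)))).
    assert (He : 0 < e /\ e <= cc / 2 /\ e <= eps * cc ^ 2 / (4 * (kap * sc + 1))).
    { assert (0 < eps * cc ^ 2 / (4 * (kap * sc + 1))) by (apply Rdiv_lt_0_compat; [apply Rmult_lt_0_compat; [lra | apply pow_lt; lra] | nra]).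
      unfold e. destruct (Rmin_spec2 (cc / 2) (eps * cc ^ 2 / (4 * (kap * sc + 1)))) as [x1 [x2 [x3|x3]]]; rewrite x3; lra. }
    destruct (derivable_pt_lim_sinh bc e (proj1 He)) as [dl Hdl].
    set (d2 := eps / (2 * (Rabs (1 - kap) + 1))).
    assert (Hd2 : 0 < d2) by (unfold d2; apply Rdiv_lt_0_compat; [lra | pose proof (Rabs_pos (1 - kap)); lra]).
    exists (Rmin dl d2). split. apply Rmin_glb_lt; [apply cond_pos|auto].
    intros beta Hb. pose proof (Rmin_l dl d2). pose proof (Rmin_r dl d2).
    set (h := beta - bc).
    assert (Hh : h < 0 /\ - h < dl /\ - h < d2) by (unfold h; lra).
    specialize (Hdl h ltac:(lra) ltac:(rewrite Rabs_left; lra)).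
    replace (bc + h) with beta in Hdl by (unfold h; ring). fold cc in Hdl. rewrite Hsc in Hdl.
    set (q := (sinh beta - sc) / h) in Hdl.
    assert (Hq : cc / 2 <= q) by (unfold Rabs in Hdl; destruct Rcase_abs; lra).
    assert (Hsig : sinh beta = sc + q * h) by (unfold q; field; lra).
    assert (Hsc2 : sc * s2 / m = 1) by (unfold sc; field; lra).
    replace ((1 + sinh beta * m / (1 - sinh beta * s2 / m)) * (bc - beta) - kap * tanh bc)
      with ((bc - beta) * (1 - kap) + kap * sc * (cc - q) / (q * cc)).
    2: { unfold tanh. rewrite Hsc. fold cc. rewrite Hsig. unfold kap.
         replace (bc - beta) with (- h) by (unfold h; ring).
         assert (E : 1 - (sc + q * h) * s2 / m = - (q * h * s2 / m)).
         { replace (1 - (sc + q * h) * s2 / m) with (1 - sc * s2 / m - q * h * s2 / m) by (field; lra). rewrite Hsc2. ring. }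
         rewrite E. unfold sc. field. repeat split; lra. }
    eapply Rle_lt_trans. apply Rabs_triang.
    assert (A1 : Rabs ((bc - beta) * (1 - kap)) <= eps / 2 * (Rabs (1 - kap) / (Rabs (1 - kap) + 1))).
    { rewrite Rabs_mult, (Rabs_right (bc - beta)) by lra.
      apply Rle_trans with (d2 * Rabs (1 - kap)). apply Rmult_le_compat_r. apply Rabs_pos. lra.
      right. unfold d2. field. pose proof (Rabs_pos (1 - kap)); lra. }
    assert (A1' : eps / 2 * (Rabs (1 - kap) / (Rabs (1 - kap) + 1)) < eps / 2).
    { assert (Rabs (1 - kap) / (Rabs (1 - kap) + 1) < 1).
      { pose proof (Rabs_pos (1 - kap)). apply Rmult_lt_reg_r with (Rabs (1 - kap) + 1). lra.
        unfold Rdiv. rewrite Rmult_assoc, Rinv_l by lra. lra. }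
      nra. }
    assert (A2 : Rabs (kap * sc * (cc - q) / (q * cc)) <= eps / 2).
    { unfold Rdiv. rewrite !Rabs_mult, Rabs_inv, (Rabs_right kap), (Rabs_right sc), (Rabs_right (q * cc)) by nra.
      rewrite Rabs_minus_sym.
      assert (Hi : / (q * cc) <= 2 / cc ^ 2).
      { replace (2 / cc ^ 2) with (/ (cc / 2 * cc)) by (field; lra). apply Rinv_le_contravar; nra. }
      assert (Rabs (q - cc) <= eps * cc ^ 2 / (4 * (kap * sc + 1))) by lra.
      assert (0 < / (q * cc)) by (apply Rinv_0_lt_compat; nra).
      apply Rle_trans with (kap * sc * (eps * cc ^ 2 / (4 * (kap * sc + 1))) * (2 / cc ^ 2)).
      apply Rmult_le_compat; try nra. apply Rmult_le_pos; [nra|apply Rabs_pos].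
      apply Rmult_le_compat_l; nra.
      replace (kap * sc * (eps * cc ^ 2 / (4 * (kap * sc + 1))) * (2 / cc ^ 2)) with (eps / 2 * (kap * sc / (kap * sc + 1))) by (field; nra).
      assert (kap * sc / (kap * sc + 1) <= 1).
      { apply Rmult_le_reg_r with (kap * sc + 1). nra. unfold Rdiv. rewrite Rmult_assoc, Rinv_l by nra. nra. }
      nra. }
    lra.
Qed.
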